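(* Let $(A,\mathcal H)$ be a left bialgebroid such that ${}_s\mathcal H$ is $A$-flat. Then for every left ideal two-sided coideal $I$ of $\mathcal H$, $\mathcal H^{\mathrm{co}\,\mathcal H/I}$ is a right $\mathcal H$-comodule $A^o$-subring of $\mathcal H$ via $t$ (with coaction induced by $\Delta$), and the assignment $I\mapsto\mathcal H^{\mathrm{co}\,\mathcal H/I}$ is inclusion-preserving.
   Context: $\Bbbk$ is a field. A left bialgebroid $(A,\mathcal H)$: $\Bbbk$-algebras $A,\mathcal H$, algebra maps $s:A\to\mathcal H$, $t:A^o\to\mathcal H$ with commuting images, $A$-bilinear $\Delta:\mathcal H\to\mathcal H\otimes_A\mathcal H$, $\varepsilon:\mathcal H\to A$ (bimodule structure $a\cdot h\cdot b=s(a)t(b)h$; $\mathcal H\otimes_A\mathcal H$ = quotient of $\mathcal H\otimes\mathcal H$ by span of $t(a)x\otimes y-x\otimes s(a)y$), with $(\mathcal H,\Delta,\varepsilon)$ a coassociative counital $A$-coring, $\Delta$ an algebra map into the Takeuchi product $\{\sum x_i\otimes_Ay_i:\sum x_it(a)\otimes_Ay_i=\sum x_i\otimes_Ay_is(a)\ \forall a\}$, $\varepsilon(xs(\varepsilon(y)))=\varepsilon(xy)=\varepsilon(xt(\varepsilon(y)))$, $\varepsilon(1)=1$; $\Delta(x)=\sum x_1\otimes_Ax_2$. ''${}_s\mathcal H$ is $A$-flat'': flat as left $A$-module via $s$. Left ideal two-sided coideal: left ideal $I$ with $\varepsilon(I)=0$, $\Delta(I)\subseteq$ image of $I\otimes_A\mathcal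 H+\mathcal H\otimes_AI$; with $\pi:\mathcal H\to\mathcal H/I$, $\mathcal H^{\mathrm{co}\,\mathcal H/I}=\{x:\sum\pi(x_1)\otimes_Ax_2=\pi(1)\otimes_Ax\text{ in }\mathcal H/I\otimes_A\mathcal H\}$. Right $\mathcal H$-comodule $A^o$-subring via $t$: subalgebra $B\supseteq t(A)$ with a coassociative counital right $A$-linear coaction $\delta:B\to B\otimes_A\mathcal H$ ($b\cdot a=t(a)b$; $\mathcal H$ left via $s$) such that $(\iota\otimes_A\mathcal H)\delta=\Delta\iota$, $\iota:B\to\mathcal H$ the inclusion. *)

(* Defs.v *)
From HB Require Import structures.
From mathcomp Require Import all_boot all_order all_algebra.
Set Implicit Arguments. Unset Strict Implicit. Unset Printing Implicit Defensive.
Import GRing.Theory.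
Local Open Scope ring_scope.

(* Balanced tensor products  L (x)_A R  of a right A-module L (action ra)     *)
(* and a left A-module R (action la), both k-vector spaces.  An element is a  *)
(* formal finite sum  sum_i x_i (x) y_i  represented by the sequence of pairs *)
(* [:: (x_i, y_i)], and  tens_eq s1 s2  means the two sums are equal in the   *)
(* tensor product.  P, Q restrict the factors to k-subspaces (stable under    *)
(* the actions), used for B (x)_A H with B a subring of H; Z is a subspace of *)
(* the left factor that is killed, used for (L/Z) (x)_A R.                    *)
(* tens_eq is the congruence on the free commutative monoid of formal sums    *)
(* generated by biadditivity, k-balancedness, A-balancedness, 0 (x) y = 0 and *)
(* z (x) y = 0 for z in Z; the quotient is exactly the abelian group          *)
(* (k-vector space) (L/Z) (x)_A R, resp. P (x)_A Q.                           *)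

Definition wf2 (L R : eqType) (P : L -> Prop) (Q : R -> Prop) (s : seq (L * R)) :=
  forall p, p \in s -> P p.1 /\ Q p.2.

Inductive tens_eq (k : fieldType) (A : Type) (L R : lmodType k)
    (ra : L -> A -> L) (la : A -> R -> R)
    (P : L -> Prop) (Q : R -> Prop) (Z : L -> Prop) :
    seq (L * R) -> seq (L * R) -> Prop :=
| te_refl s : wf2 P Q s -> tens_eq ra la P Q Z s s
| te_sym s1 s2 : tens_eq ra la P Q Z s1 s2 -> tens_eq ra la P Q Z s2 s1
| te_trans s1 s2 s3 : tens_eq ra la P Q Z s1 s2 -> tens_eq ra la P Q Z s2 s3 ->
    tens_eq ra la P Q Z s1 s3
| te_cat s1 s2 s3 s4 : tens_eq ra la P Q Z s1 s2 -> tens_eq ra la P Q Z s3 s4 ->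
    tens_eq ra la P Q Z (s1 ++ s3) (s2 ++ s4)
| te_comm s1 s2 : wf2 P Q s1 -> wf2 P Q s2 ->
    tens_eq ra la P Q Z (s1 ++ s2) (s2 ++ s1)
| te_addl x x' y : P x -> P x' -> Q y ->
    tens_eq ra la P Q Z [:: (x + x', y)] [:: (x, y); (x', y)]
| te_addr x y y' : P x -> Q y -> Q y' ->
    tens_eq ra la P Q Z [:: (x, y + y')] [:: (x, y); (x, y')]
| te_scal (c : k) x y : P x -> Q y ->
    tens_eq ra la P Q Z [:: (c *: x, y)] [:: (x, c *: y)]
| te_zero y : P 0 -> Q y -> tens_eq ra la P Q Z [:: (0, y)] [::]
| te_bal a x y : P x -> Q y -> P (ra x a) -> Q (la a y) ->
    tens_eq ra la P Q Z [:: (ra x a, y)] [:: (x, la a y)]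
| te_kill z y : P z -> Z z -> Q y -> tens_eq ra la P Q Z [:: (z, y)] [::].

(* Triple balanced tensor products  L (x)_A M (x)_A R, first factor in P1.   *)
Definition wf3 (L M R : eqType) (P1 : L -> Prop) (s : seq (L * M * R)) :=
  forall p, p \in s -> P1 p.1.1.

Inductive tens3_eq (k : fieldType) (A : Type) (L M R : lmodType k)
    (r1 : L -> A -> L) (l2 : A -> M -> M) (r2 : M -> A -> M) (l3 : A -> R -> R)
    (P1 : L -> Prop) : seq (L * M * R) -> seq (L * M * R) -> Prop :=
| t3_refl s : wf3 P1 s -> tens3_eq r1 l2 r2 l3 P1 s s
| t3_sym s1 s2 : tens3_eq r1 l2 r2 l3 P1 s1 s2 -> tens3_eq r1 l2 r2 l3 P1 s2 s1
| t3_trans s1 s2 s3 : tens3_eq r1 l2 r2 l3 P1 s1 s2 ->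
    tens3_eq r1 l2 r2 l3 P1 s2 s3 -> tens3_eq r1 l2 r2 l3 P1 s1 s3
| t3_cat s1 s2 s3 s4 : tens3_eq r1 l2 r2 l3 P1 s1 s2 ->
    tens3_eq r1 l2 r2 l3 P1 s3 s4 -> tens3_eq r1 l2 r2 l3 P1 (s1 ++ s3) (s2 ++ s4)
| t3_comm s1 s2 : wf3 P1 s1 -> wf3 P1 s2 ->
    tens3_eq r1 l2 r2 l3 P1 (s1 ++ s2) (s2 ++ s1)
| t3_add1 x x' y z : P1 x -> P1 x' ->
    tens3_eq r1 l2 r2 l3 P1 [:: (x + x', y, z)] [:: (x, y, z); (x', y, z)]
| t3_add2 x y y' z : P1 x ->
    tens3_eq r1 l2 r2 l3 P1 [:: (x, y + y', z)] [:: (x, y, z); (x, y', z)]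
| t3_add3 x y z z' : P1 x ->
    tens3_eq r1 l2 r2 l3 P1 [:: (x, y, z + z')] [:: (x, y, z); (x, y, z')]
| t3_scal12 (c : k) x y z : P1 x ->
    tens3_eq r1 l2 r2 l3 P1 [:: (c *: x, y, z)] [:: (x, c *: y, z)]
| t3_scal23 (c : k) x y z : P1 x ->
    tens3_eq r1 l2 r2 l3 P1 [:: (x, c *: y, z)] [:: (x, y, c *: z)]
| t3_zero y z : P1 0 -> tens3_eq r1 l2 r2 l3 P1 [:: (0, y, z)] [::]
| t3_bal12 a x y z : P1 x -> P1 (r1 x a) ->
    tens3_eq r1 l2 r2 l3 P1 [:: (r1 x a, y, z)] [:: (x, l2 a y, z)]
| t3_bal23 a x y z : P1 x ->
    tens3_eq r1 l2 r2 l3 P1 [:: (x, r2 y a, z)] [:: (x, y, l3 a z)].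

Section Bialgebroid.
Variables (k : fieldType) (A H : algType k).
Variables (s t : A -> H).

(* H as an A-bimodule:  a . h . b = s(a) t(b) h *)
Definition Hr (x : H) (a : A) : H := t a * x.
Definition Hl (a : A) (y : H) : H := s a * y.

Definition allH : H -> Prop := fun _ => True.
Definition noneH : H -> Prop := fun _ => False.

(* equality in H (x)_A H *)
Definition teqHH := tens_eq Hr Hl allH allH noneH.
(* equality in (H/I) (x)_A H *)
Definition teqQH (I : H -> Prop) := tens_eq Hr Hl allH allH I.
(* equality in B (x)_A H, B a subspace of H stable under t(A) . _ *)
Definition teqBH (B : H -> Prop) := tens_eq Hr Hl B allH noneH.
(* equality in B (x)_A H (x)_A H *)
Definition teqB3 (B : H -> Prop) := tens3_eq Hr Hl Hr Hl B.

Definition tscale (c : k) (u : seq (H * H)) := [seq (c *: p.1, p.2) | p <- u].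

Definition kalg_map (f : A -> H) :=
  [/\ forall (c : k) x y, f (c *: x + y) = c *: f x + f y,
      f 1 = 1 & forall x y, f (x * y) = f x * f y].
(* algebra map  A^o -> H *)
Definition kalg_antimap (f : A -> H) :=
  [/\ forall (c : k) x y, f (c *: x + y) = c *: f x + f y,
      f 1 = 1 & forall x y, f (x * y) = f y * f x].

Definition base_maps :=
  [/\ kalg_map s, kalg_antimap t & forall a b, s a * t b = t b * s a].

Definition coring_axioms (Delta : H -> seq (H * H)) (eps : H -> A) :=
  [/\
      (forall (c : k) x y, teqHH (Delta (c *: x + y)) (tscale c (Delta x) ++ Delta y)),
      (forall a b h, teqHH (Delta (s a * t b * h))
                           [seq (s a * p.1, t b * p.2) | p <- Delta h]),
      (forall (c : k) x y, eps (c *: x + y) = c *: eps x + eps y),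
      (forall a b h, eps (s a * t b * h) = a * eps h * b) &
   [/\
      (forall x, teqB3 allH
          (flatten [seq [seq (q.1, q.2, p.2) | q <- Delta p.1] | p <- Delta x])
          (flatten [seq [seq (p.1, q.1, q.2) | q <- Delta p.2] | p <- Delta x])),
      (* counitality, via A (x)_A H ~ H, a (x) h |-> s(a) h, and
         H (x)_A A ~ H, h (x) a |-> t(a) h *)
      (forall x, \sum_(p <- Delta x) s (eps p.1) * p.2 = x) &
      (forall x, \sum_(p <- Delta x) t (eps p.2) * p.1 = x)]].

Definition bialg_axioms (Delta : H -> seq (H * H)) (eps : H -> A) :=
  [/\ (* Delta lands in the Takeuchi product *)
      (forall x a, teqHH [seq (p.1 * t a, p.2) | p <- Delta x]
                         [seq (p.1, p.2 * s a) | p <- Delta x]),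
      (* Delta is an algebra map into the Takeuchi product *)
      (forall x y, teqHH (Delta (x * y))
          (flatten [seq [seq (p.1 * q.1, p.2 * q.2) | q <- Delta y] | p <- Delta x])),
      teqHH (Delta 1) [:: (1, 1)],
      (forall x y, eps (x * s (eps y)) = eps (x * y) /\
                   eps (x * y) = eps (x * t (eps y))) &
      eps 1 = 1].

Definition left_bialgebroid (Delta : H -> seq (H * H)) (eps : H -> A) : Prop :=
  [/\ base_maps, coring_axioms Delta eps & bialg_axioms Delta eps].

Definition right_Amod (M : lmodType k) (r : M -> A -> M) :=
  [/\ forall x y a, r (x + y) a = r x a + r y a,
      forall x a b, r x (a + b) = r x a + r x b,
      forall x a b, r (r x a) b = r x (a * b),
      forall x, r x 1 = x &
      forall (c : k) x a, r (c *: x) a = c *: r x a /\ r x (c *: a) = c *: r x a].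

(* _s H is flat as a left A-module: - (x)_A _sH preserves injections of
   right A-modules *)
Definition sH_flat : Prop :=
  forall (M N : lmodType k) (rM : M -> A -> M) (rN : N -> A -> N) (f : M -> N),
    right_Amod rM -> right_Amod rN ->
    (forall (c : k) x y, f (c *: x + y) = c *: f x + f y) ->
    (forall x a, f (rM x a) = rN (f x) a) ->
    injective f ->
    forall u v : seq (M * H),
      tens_eq rN Hl (fun _ => True) allH (fun _ => False)
              [seq (f p.1, p.2) | p <- u] [seq (f p.1, p.2) | p <- v] ->
      tens_eq rM Hl (fun _ => True) allH (fun _ => False) u v.

Variables (Delta : H -> seq (H * H)) (eps : H -> A).

Definition left_ideal_coideal (I : H -> Prop) : Prop :=
  [/\ I 0, (forall (c : k) x y, I x -> I y -> I (c *: x + y)),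
      (forall h x, I x -> I (h * x)),
      (forall x, I x -> eps x = 0) &
      (forall x, I x -> exists u : seq (H * H),
          (forall p, p \in u -> I p.1 \/ I p.2) /\ teqHH (Delta x) u)].

Definition coinv (I : H -> Prop) (x : H) : Prop :=
  teqQH I (Delta x) [:: (1, x)].

Definition right_comodule_subring (B : H -> Prop) (delta : H -> seq (H * H)) :=
  [/\
      [/\ B 0, B 1,
          (forall (c : k) x y, B x -> B y -> B (c *: x + y)),
          (forall x y, B x -> B y -> B (x * y)) &
          (forall a, B (t a))],
      (forall b, B b -> forall p, p \in delta b -> B p.1),
      (* delta is k-linear and right A-linear, with b . a = t(a) b *)
      (forall (c : k) x y, B x -> B y ->
          teqBH B (delta (c *: x + y)) (tscale c (delta x) ++ delta y)),
      (forall a b, B b -> teqBH B (delta (t a * b)) [seq (p.1, t a * p.2) | p <- delta b]) &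
   [/\
      (forall b, B b -> teqB3 B
          (flatten [seq [seq (q.1, q.2, p.2) | q <- delta p.1] | p <- delta b])
          (flatten [seq [seq (p.1, q.1, q.2) | q <- Delta p.2] | p <- delta b])),
      (* counital (B (x)_A A ~ B, b (x) a |-> t(a) b) *)
      (forall b, B b -> \sum_(p <- delta b) t (eps p.2) * p.1 = b) &
      (* (iota (x)_A H) delta = Delta iota, in H (x)_A H *)
      (forall b, B b -> teqHH (delta b) (Delta b))]].

End Bialgebroid.

(* Main.v *)
Require Import Defs.
From HB Require Import structures.
From mathcomp Require Import all_boot all_order all_algebra.
From mathcomp Require Import boolp.
Set Implicit Arguments. Unset Strict Implicit. Unset Printing Implicit Defensive.
Import GRing.Theory.
Local Open Scope ring_scope.


Definition Wl (T : eqType) (Wp : T -> Prop) (u : seq T) := forall p, p \in u -> Wp p.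

Lemma Wl_cat (T : eqType) (Wp : T -> Prop) u v : Wl Wp (u ++ v) <-> Wl Wp u /\ Wl Wp v.
Proof.
split=> [h|[h1 h2]].
  by split=> p pu; apply: h; rewrite mem_cat pu ?orbT.
by move=> p; rewrite mem_cat => /orP[/h1|/h2].
Qed.

Lemma Wl_perm (T : eqType) (Wp : T -> Prop) u v : perm_eq u v -> Wl Wp v -> Wl Wp u.
Proof. by move=> pe h p pu; apply: h; rewrite -(perm_mem pe). Qed.

Lemma perm_flatten_cat (I : Type) (T : eqType) (f g : I -> seq T) (u : seq I) :
  perm_eq (flatten [seq f i ++ g i | i <- u]) (flatten (map f u) ++ flatten (map g u)).
Proof.
elim: u => [|i u IH] //=.
rewrite -!catA perm_cat2l.
apply: perm_trans (_ : perm_eq _ (g i ++ flatten (map f u) ++ flatten (map g u))) _.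
  by rewrite perm_cat2l.
by rewrite perm_catCA.
Qed.

Lemma perm_flatten_swap (I J : Type) (T : eqType) (f : I -> J -> T) (u : seq I) (v : seq J) :
  perm_eq (flatten [seq [seq f i j | j <- v] | i <- u])
          (flatten [seq [seq f i j | i <- u] | j <- v]).
Proof.
elim: u => [|i u IH] /=; first by elim: v.
apply: perm_trans (_ : perm_eq _ ([seq f i j | j <- v] ++
   flatten [seq [seq f i0 j | i0 <- u] | j <- v])) _; first by rewrite perm_cat2l.
rewrite perm_sym.
apply: perm_trans (perm_flatten_cat (fun j => [:: f i j]) (fun j => [seq f i0 j | i0 <- u]) v) _.
rewrite perm_cat2r; clear IH; elim: v => //= j v IHv; by rewrite perm_cons.
Qed.

Section EqvTheory.
Variables (T : eqType) (Wp : T -> Prop) (E : seq T -> seq T -> Prop).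
Hypotheses (Erefl : forall u, Wl Wp u -> E u u)
  (Esym : forall u v, E u v -> E v u)
  (Etrans : forall u v w, E u v -> E v w -> E u w)
  (Ecat : forall a b c d, E a b -> E c d -> E (a ++ c) (b ++ d))
  (Ecomm : forall u v, Wl Wp u -> Wl Wp v -> E (u ++ v) (v ++ u)).

Lemma E_perm u v : Wl Wp u -> perm_eq u v -> E u v.
Proof.
elim: u v => [|x u IH] v Wu pe.
  by move: pe; rewrite perm_sym => /perm_nilP ->; apply: Erefl.
have xv : x \in v by rewrite -(perm_mem pe) mem_head.
case/splitPr: xv pe => v1 v2 pe.
have pe' : perm_eq u (v1 ++ v2).
  rewrite -(perm_cons x) (perm_trans pe) //.
  by rewrite -cat1s perm_catCA.
have [Wx Wu'] : Wp x /\ Wl Wp u.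
  by split; [apply: Wu; rewrite mem_head | move=> p pu; apply: Wu; rewrite inE pu orbT].
have W12 : Wl Wp (v1 ++ v2) by apply: (Wl_perm _ Wu'); rewrite perm_sym.
have [W1 W2] := (Wl_cat Wp v1 v2).1 W12.
apply: Etrans (_ : E (x :: (v1 ++ v2)) _).
  rewrite -[x :: u]cat1s -[x :: (v1 ++ v2)]cat1s.
  apply: Ecat; last by apply: IH.
  by apply: Erefl => p; rewrite inE => /eqP ->.
rewrite -cat1s (_ : v1 ++ x :: v2 = v1 ++ [:: x] ++ v2) // !catA.
apply: Ecat; last by apply: Erefl.
by apply: Ecomm => // p; rewrite inE => /eqP ->.
Qed.

Lemma E_perm' u v : Wl Wp v -> perm_eq u v -> E u v.
Proof. by move=> Wv pe; apply: E_perm => //; apply: Wl_perm pe Wv. Qed.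

End EqvTheory.


Definition Fm (S T : Type) (f : S -> seq T) (u : seq S) := flatten (map f u).

Lemma Fm_cat (S T : Type) (f : S -> seq T) u v : Fm f (u ++ v) = Fm f u ++ Fm f v.
Proof. by rewrite /Fm map_cat flatten_cat. Qed.

Lemma Fm1 (S T : Type) (f : S -> seq T) a : Fm f [:: a] = f a.
Proof. by rewrite /Fm /= cats0. Qed.

Lemma Fm2 (S T : Type) (f : S -> seq T) a b : Fm f [:: a; b] = f a ++ f b.
Proof. by rewrite /Fm /= cats0. Qed.

Lemma Fm_W (S T : eqType) (Wp : T -> Prop) (Sp : S -> Prop) (f : S -> seq T) u :
  (forall p, Sp p -> Wl Wp (f p)) -> Wl Sp u -> Wl Wp (Fm f u).
Proof.
move=> hf hu p /flatten_mapP [q qu pf].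
by apply: (hf q (hu q qu)).
Qed.

Section FlatResp.
Variables (k : fieldType) (A : Type) (L R : lmodType k) (ra : L -> A -> L)
  (la : A -> R -> R) (P : L -> Prop) (Q : R -> Prop) (Z : L -> Prop).
Variables (T : eqType) (Wp : T -> Prop) (E : seq T -> seq T -> Prop)
  (f : L * R -> seq T).
Hypotheses (Erefl : forall u, Wl Wp u -> E u u)
  (Esym : forall u v, E u v -> E v u)
  (Etrans : forall u v w, E u v -> E v w -> E u w)
  (Ecat : forall a b c d, E a b -> E c d -> E (a ++ c) (b ++ d))
  (Ecomm : forall u v, Wl Wp u -> Wl Wp v -> E (u ++ v) (v ++ u)).
Hypothesis Wf : forall p, P p.1 -> Q p.2 -> Wl Wp (f p).
Hypotheses
 (Haddl : forall x x' y, P x -> P x' -> Q y -> E (f (x + x', y)) (f (x, y) ++ f (x', y)))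
 (Haddr : forall x y y', P x -> Q y -> Q y' -> E (f (x, y + y')) (f (x, y) ++ f (x, y')))
 (Hscal : forall c x y, P x -> Q y -> E (f (c *: x, y)) (f (x, c *: y)))
 (Hzero : forall y, P 0 -> Q y -> E (f (0, y)) [::])
 (Hbal : forall a x y, P x -> Q y -> P (ra x a) -> Q (la a y) ->
     E (f (ra x a, y)) (f (x, la a y)))
 (Hkill : forall z y, P z -> Z z -> Q y -> E (f (z, y)) [::]).

Lemma flat_resp u v : tens_eq ra la P Q Z u v -> E (Fm f u) (Fm f v).
Proof.
have WF s : wf2 P Q s -> Wl Wp (Fm f s).
  move=> hs; apply: (@Fm_W _ _ Wp (fun p => P p.1 /\ Q p.2)) => // p [] *; exact: Wf.
elim=> {u v}.
- by move=> s hs; apply: Erefl; apply: WF.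
- by move=> s1 s2 _ h; apply: Esym.
- by move=> s1 s2 s3 _ h1 _ h2; apply: Etrans h2.
- by move=> s1 s2 s3 s4 _ h1 _ h2; rewrite !Fm_cat; apply: Ecat.
- by move=> s1 s2 h1 h2; rewrite !Fm_cat; apply: Ecomm; apply: WF.
- by move=> x x' y *; rewrite Fm1 Fm2; apply: Haddl.
- by move=> x y y' *; rewrite Fm1 Fm2; apply: Haddr.
- by move=> c x y *; rewrite !Fm1; apply: Hscal.
- by move=> y *; rewrite Fm1; apply: Hzero.
- by move=> a x y *; rewrite !Fm1; apply: Hbal.
- by move=> z y *; rewrite Fm1; apply: Hkill.
Qed.
End FlatResp.

Section FlatResp3.
Variables (k : fieldType) (A : Type) (L M R : lmodType k)
  (r1 : L -> A -> L) (l2 : A -> M -> M) (r2 : M -> A -> M) (l3 : A -> R -> R)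
  (P1 : L -> Prop).
Variables (T : eqType) (Wp : T -> Prop) (E : seq T -> seq T -> Prop)
  (f : L * M * R -> seq T).
Hypotheses (Erefl : forall u, Wl Wp u -> E u u)
  (Esym : forall u v, E u v -> E v u)
  (Etrans : forall u v w, E u v -> E v w -> E u w)
  (Ecat : forall a b c d, E a b -> E c d -> E (a ++ c) (b ++ d))
  (Ecomm : forall u v, Wl Wp u -> Wl Wp v -> E (u ++ v) (v ++ u)).
Hypothesis Wf : forall p, P1 p.1.1 -> Wl Wp (f p).
Hypotheses
 (Hadd1 : forall x x' y z, P1 x -> P1 x' -> E (f (x + x', y, z)) (f (x, y, z) ++ f (x', y, z)))
 (Hadd2 : forall x y y' z, P1 x -> E (f (x, y + y', z)) (f (x, y, z) ++ f (x, y', z)))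
 (Hadd3 : forall x y z z', P1 x -> E (f (x, y, z + z')) (f (x, y, z) ++ f (x, y, z')))
 (Hscal12 : forall c x y z, P1 x -> E (f (c *: x, y, z)) (f (x, c *: y, z)))
 (Hscal23 : forall c x y z, P1 x -> E (f (x, c *: y, z)) (f (x, y, c *: z)))
 (Hzero : forall y z, P1 0 -> E (f (0, y, z)) [::])
 (Hbal12 : forall a x y z, P1 x -> P1 (r1 x a) -> E (f (r1 x a, y, z)) (f (x, l2 a y, z)))
 (Hbal23 : forall a x y z, P1 x -> E (f (x, r2 y a, z)) (f (x, y, l3 a z))).

Lemma flat3_resp u v : tens3_eq r1 l2 r2 l3 P1 u v -> E (Fm f u) (Fm f v).
Proof.
have WF s : wf3 P1 s -> Wl Wp (Fm f s).
  move=> hs; apply: (@Fm_W _ _ Wp (fun p => P1 p.1.1)) => // p *; exact: Wf.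
elim=> {u v}.
- by move=> s hs; apply: Erefl; apply: WF.
- by move=> s1 s2 _ h; apply: Esym.
- by move=> s1 s2 s3 _ h1 _ h2; apply: Etrans h2.
- by move=> s1 s2 s3 s4 _ h1 _ h2; rewrite !Fm_cat; apply: Ecat.
- by move=> s1 s2 h1 h2; rewrite !Fm_cat; apply: Ecomm; apply: WF.
- by move=> *; rewrite Fm1 Fm2; apply: Hadd1.
- by move=> *; rewrite Fm1 Fm2; apply: Hadd2.
- by move=> *; rewrite Fm1 Fm2; apply: Hadd3.
- by move=> *; rewrite !Fm1; apply: Hscal12.
- by move=> *; rewrite !Fm1; apply: Hscal23.
- by move=> *; rewrite Fm1; apply: Hzero.
- by move=> *; rewrite !Fm1; apply: Hbal12.
- by move=> *; rewrite !Fm1; apply: Hbal23.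
Qed.
End FlatResp3.


Definition tsc (k : fieldType) (L : lmodType k) (R : Type) (c : k) (u : seq (L * R)) :=
  [seq (c *: p.1, p.2) | p <- u].
Definition negl (k : fieldType) (L : lmodType k) (R : Type) (u : seq (L * R)) :=
  [seq (- p.1, p.2) | p <- u].

Section TE.
Variables (k : fieldType) (A : Type) (L R : lmodType k) (ra : L -> A -> L)
  (la : A -> R -> R) (Z : L -> Prop).
Local Notation TE := (tens_eq ra la (fun _ : L => True) (fun _ : R => True) Z).

Lemma TE_refl u : TE u u.
Proof. by apply: te_refl. Qed.
Lemma TE_sym u v : TE u v -> TE v u.
Proof. exact: te_sym. Qed.
Lemma TE_trans u v w : TE u v -> TE v w -> TE u w.
Proof. exact: te_trans. Qed.
Lemma TE_cat a b c d : TE a b -> TE c d -> TE (a ++ c) (b ++ d).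
Proof. exact: te_cat. Qed.
Lemma TE_comm u v : TE (u ++ v) (v ++ u).
Proof. by apply: te_comm. Qed.
Lemma TE_catl a c d : TE c d -> TE (a ++ c) (a ++ d).
Proof. by move=> h; apply: TE_cat => //; apply: TE_refl. Qed.
Lemma TE_catr a b c : TE a b -> TE (a ++ c) (b ++ c).
Proof. by move=> h; apply: TE_cat => //; apply: TE_refl. Qed.

Lemma TE_perm u v : perm_eq u v -> TE u v.
Proof.
exact: (@E_perm _ (fun _ => True) (fun u v => TE u v) (fun u _ => TE_refl u)
  (@TE_trans) (@TE_cat) (fun u v _ _ => TE_comm u v) u v (fun _ _ => I)).
Qed.

Lemma TE_eq u v : u = v -> TE u v.
Proof. by move=> ->; apply: TE_refl. Qed.

Lemma TE_neg1 x y : TE [:: (x, y); (- x, y)] [::].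
Proof.
apply: TE_trans (_ : TE [:: (x + - x, y)] _).
  by apply: TE_sym; apply: te_addl.
by rewrite subrr; apply: te_zero.
Qed.

Lemma TE_neg u : TE (u ++ negl u) [::].
Proof.
elim: u => [|[x y] u IH] /=; first exact: TE_refl.
apply: TE_trans (_ : TE ([:: (x, y); (- x, y)] ++ (u ++ negl u)) _).
  by apply: TE_perm; rewrite /= perm_cons -cat1s perm_catCA.
by rewrite -[[::]]cats0; apply: TE_cat => //; apply: TE_neg1.
Qed.

Lemma TE_cancel u v w : TE (u ++ w) (v ++ w) -> TE u v.
Proof.
move=> h.
apply: TE_trans (_ : TE (u ++ (w ++ negl w)) _).
  by rewrite -{1}[u]cats0; apply: TE_catl; apply: TE_sym; apply: TE_neg.
apply: TE_trans (_ : TE (v ++ (w ++ negl w)) _); last first.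
  by rewrite -{2}[v]cats0; apply: TE_catl; apply: TE_neg.
by rewrite !catA; apply: TE_catr.
Qed.

Lemma TE_zero2 x : TE [:: (x, 0)] [::].
Proof.
apply: TE_trans (_ : TE [:: (0 *: x, 0)] _).
  by rewrite -{1}(scale0r (0 : R)); apply: TE_sym; apply: te_scal.
by rewrite scale0r; apply: te_zero.
Qed.

Lemma TE_zero1 y : TE [:: (0, y)] [::].
Proof. by apply: te_zero. Qed.

Lemma TE_scaleD c d u : TE (tsc (c + d) u) (tsc c u ++ tsc d u).
Proof.
elim: u => [|[x y] u IH] /=; first exact: TE_refl.
apply: TE_trans (_ : TE ([:: (c *: x, y); (d *: x, y)] ++ (tsc c u ++ tsc d u)) _).
  by rewrite -cat1s; apply: TE_cat => //; rewrite scalerDl; apply: te_addl.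
by apply: TE_perm; rewrite /= perm_cons -cat1s perm_catCA.
Qed.

Lemma TE_addl1 x x' y : TE [:: (x + x', y)] [:: (x, y); (x', y)].
Proof. by apply: te_addl. Qed.
Lemma TE_addr1 x y y' : TE [:: (x, y + y')] [:: (x, y); (x, y')].
Proof. by apply: te_addr. Qed.
Lemma TE_scal1 c x y : TE [:: (c *: x, y)] [:: (x, c *: y)].
Proof. by apply: te_scal. Qed.
Lemma TE_bal1 a x y : TE [:: (ra x a, y)] [:: (x, la a y)].
Proof. by apply: te_bal. Qed.
Lemma TE_kill1 z y : Z z -> TE [:: (z, y)] [::].
Proof. by move=> hz; apply: te_kill. Qed.

Hypothesis la_scal : forall a (c : k) y, la a (c *: y) = c *: la a y.

Lemma TE_tsc c u v : TE u v -> TE (tsc c u) (tsc c v).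
Proof.
move=> h.
have FE w : tsc c w = Fm (fun p => [:: (c *: p.1, p.2)]) w.
  by elim: w => //= p w ->.
rewrite !FE.
apply: (@flat_resp _ _ _ _ ra la (fun _ => True) (fun _ => True) Z _
   (fun _ => True) (fun u v => TE u v) _ (fun u _ => TE_refl u) (@TE_sym) (@TE_trans)
   (@TE_cat) (fun u v _ _ => TE_comm u v) (fun _ _ _ _ _ => I)) h.
- by move=> x x' y _ _ _ /=; rewrite scalerDr; apply: te_addl.
- by move=> x y y' _ _ _ /=; apply: te_addr.
- move=> d x y _ _ /=; rewrite scalerA mulrC -scalerA.
  by apply: te_scal.
- by move=> y _ _ /=; rewrite scaler0; apply: te_zero.
- move=> a x y _ _ _ _ /=.
  apply: (TE_trans (v := [:: (ra x a, c *: y)])); first by apply: te_scal.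
  apply: (TE_trans (v := [:: (x, la a (c *: y))])); first by apply: te_bal.
  by rewrite la_scal; apply: TE_sym; apply: te_scal.
- move=> z y _ hz _ /=.
  apply: (TE_trans (v := [:: (z, c *: y)])); first by apply: te_scal.
  by apply: te_kill.
Qed.

End TE.

Section TEFlat.
Variables (k : fieldType) (A : Type) (L R : lmodType k) (ra : L -> A -> L)
  (la : A -> R -> R) (P : L -> Prop) (Q : R -> Prop) (Z : L -> Prop).
Variables (A' : Type) (L' R' : lmodType k) (ra' : L' -> A' -> L')
  (la' : A' -> R' -> R') (Z' : L' -> Prop) (f : L * R -> seq (L' * R')).
Local Notation TE' := (tens_eq ra' la' (fun _ : L' => True) (fun _ : R' => True) Z').
Hypotheses
 (Haddl : forall x x' y, P x -> P x' -> Q y -> TE' (f (x + x', y)) (f (x, y) ++ f (x', y)))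
 (Haddr : forall x y y', P x -> Q y -> Q y' -> TE' (f (x, y + y')) (f (x, y) ++ f (x, y')))
 (Hscal : forall c x y, P x -> Q y -> TE' (f (c *: x, y)) (f (x, c *: y)))
 (Hzero : forall y, P 0 -> Q y -> TE' (f (0, y)) [::])
 (Hbal : forall a x y, P x -> Q y -> P (ra x a) -> Q (la a y) ->
     TE' (f (ra x a, y)) (f (x, la a y)))
 (Hkill : forall z y, P z -> Z z -> Q y -> TE' (f (z, y)) [::]).

Lemma TE_flat u v : tens_eq ra la P Q Z u v -> TE' (Fm f u) (Fm f v).
Proof.
move=> h.
apply: (flat_resp (Wp := fun _ => True) (E := fun u v => TE' u v)) h => //.
- by move=> *; apply: TE_refl.
- exact: TE_sym.
- exact: TE_trans.
- exact: TE_cat.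
- by move=> *; apply: TE_comm.
Qed.
End TEFlat.

Lemma Fm_map (S T : Type) (g : S -> T) (u : seq S) : Fm (fun p => [:: g p]) u = map g u.
Proof. by rewrite /Fm; elim: u => //= p u ->. Qed.

Section TEpw.
Variables (k : fieldType) (A : Type) (L R : lmodType k) (ra : L -> A -> L)
  (la : A -> R -> R) (Z : L -> Prop).
Local Notation TE := (tens_eq ra la (fun _ : L => True) (fun _ : R => True) Z).

Lemma TE_pw (X : Type) (F G : X -> L * R) w :
  (forall p, TE [:: F p] [:: G p]) -> TE (map F w) (map G w).
Proof.
move=> h; elim: w => [|p w IH] /=; first exact: TE_refl.
by rewrite -cat1s -[G p :: _]cat1s; apply: TE_cat.
Qed.

Lemma TE_pw_nil (X : Type) (F : X -> L * R) w :
  (forall p, TE [:: F p] [::]) -> TE (map F w) [::].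
Proof.
move=> h; elim: w => [|p w IH] /=; first exact: TE_refl.
by rewrite -cat1s -[[::]]cat0s; apply: TE_cat.
Qed.

Lemma TE_pw2 (X : Type) (F G1 G2 : X -> L * R) w :
  (forall p, TE [:: F p] [:: G1 p; G2 p]) -> TE (map F w) (map G1 w ++ map G2 w).
Proof.
move=> h; apply: (@TE_trans _ _ _ _ _ _ _ _ (flatten [seq [:: G1 p] ++ [:: G2 p] | p <- w])).
  elim: w => [|p w IH] /=; first exact: TE_refl.
  exact: (@TE_cat _ _ _ _ _ _ _ [:: F p] [:: G1 p; G2 p] _ _ (h p) IH).
apply: TE_perm.
apply: perm_trans (perm_flatten_cat (fun p => [:: G1 p]) (fun p => [:: G2 p]) w) _.
by rewrite -(Fm_map G1 w) -(Fm_map G2 w) /Fm perm_refl.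
Qed.
End TEpw.

Lemma tens_eq_mono (k : fieldType) (A : Type) (L R : lmodType k) (ra : L -> A -> L)
  (la : A -> R -> R) (P : L -> Prop) (Q : R -> Prop) (Z Z' : L -> Prop) u v :
  (forall x, Z x -> Z' x) -> tens_eq ra la P Q Z u v -> tens_eq ra la P Q Z' u v.
Proof.
move=> hZ; elim=> {u v}; try by econstructor; eauto.
Qed.


Section Quot.
Variables (k : fieldType) (A H : algType k) (s : A -> H) (L : lmodType k)
  (ra : L -> A -> L) (Z : L -> Prop).
Definition QE := tens_eq ra (Hl s) (fun _ : L => True) (@allH k H) Z.

Record tq := TQ { tq_cls : seq (L * H) -> Prop; tq_ax : exists u, tq_cls = QE u }.

Definition tcl (u : seq (L * H)) : tq := @TQ (QE u) (ex_intro _ u erefl).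
Definition trep (S : tq) : seq (L * H) := proj1_sig (cid (tq_ax S)).

Lemma tq_eq (S1 S2 : tq) : tq_cls S1 = tq_cls S2 -> S1 = S2.
Proof.
case: S1 S2 => c1 h1 [c2 h2] /= e; subst.
by rewrite (Prop_irrelevance h1 h2).
Qed.

Lemma Hl_scal a (c : k) (y : H) : Hl s a (c *: y) = c *: Hl s a y.
Proof. by rewrite /Hl scalerAr. Qed.

Lemma tcl_eq u v : QE u v -> tcl u = tcl v.
Proof.
move=> h; apply: tq_eq => /=; apply: funext => w; apply: propext.
by split=> h'; [apply: TE_trans (TE_sym h) h' | apply: TE_trans h h'].
Qed.

Lemma tcl_inj u v : tcl u = tcl v -> QE u v.
Proof.
move=> /(congr1 tq_cls) /= e.
by rewrite e; apply: TE_refl.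
Qed.

Lemma trepK S : tcl (trep S) = S.
Proof.
apply: tq_eq => /=; rewrite /trep.
by case: (cid (tq_ax S)) => u /= ->.
Qed.

Lemma trep_cl u : QE (trep (tcl u)) u.
Proof. by apply: tcl_inj; rewrite trepK. Qed.

Definition tq_add S1 S2 := tcl (trep S1 ++ trep S2).
Definition tq_opp S := tcl (negl (trep S)).
Definition tq_zero := tcl [::].
Definition tq_scale (c : k) S := tcl (tsc c (trep S)).

Lemma tq_addE u v : tq_add (tcl u) (tcl v) = tcl (u ++ v).
Proof. by apply: tcl_eq; apply: TE_cat; apply: trep_cl. Qed.

Lemma tq_scaleE c u : tq_scale c (tcl u) = tcl (tsc c u).
Proof. by apply: tcl_eq; apply: TE_tsc; [exact: Hl_scal | apply: trep_cl]. Qed.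

Lemma tq_ind (P : tq -> Prop) : (forall u, P (tcl u)) -> forall S, P S.
Proof. by move=> h S; rewrite -(trepK S). Qed.

Lemma tq_addA : associative tq_add.
Proof.
by elim/tq_ind => a; elim/tq_ind => b; elim/tq_ind => c; rewrite !tq_addE catA.
Qed.

Lemma tq_addC : commutative tq_add.
Proof.
by elim/tq_ind => a; elim/tq_ind => b; rewrite !tq_addE; apply: tcl_eq; apply: TE_comm.
Qed.

Lemma tq_add0 : left_id tq_zero tq_add.
Proof. by elim/tq_ind => a; rewrite /tq_zero tq_addE. Qed.

Lemma tq_addN : left_inverse tq_zero tq_opp tq_add.
Proof.
elim/tq_ind => a; rewrite /tq_opp tq_addE; apply: tcl_eq.
rewrite /QE.
apply: (TE_trans (v := a ++ negl (trep (tcl a)))); first exact: TE_comm.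
apply: (TE_trans (v := trep (tcl a) ++ negl (trep (tcl a)))); last exact: TE_neg.
by apply: TE_catr; apply: TE_sym; apply: trep_cl.
Qed.

Lemma tq_scaleA a b S : tq_scale a (tq_scale b S) = tq_scale (a * b) S.
Proof.
elim/tq_ind: S => u; rewrite !tq_scaleE; congr tcl.
by rewrite /tsc -map_comp; apply: eq_map => p /=; rewrite scalerA.
Qed.

Lemma tq_scale1 : left_id 1 tq_scale.
Proof.
elim/tq_ind => u; rewrite !tq_scaleE; congr tcl.
by rewrite /tsc; elim: u => //= [[x y] u] ->; rewrite scale1r.
Qed.

Lemma tq_scaleDr : right_distributive tq_scale tq_add.
Proof.
move=> c; elim/tq_ind => a; elim/tq_ind => b.
by rewrite tq_addE !tq_scaleE tq_addE /tsc map_cat.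
Qed.

Lemma tq_scaleDl S : {morph tq_scale^~ S : a b / a + b >-> tq_add a b}.
Proof.
move=> a b; elim/tq_ind: S => u.
by rewrite !tq_scaleE tq_addE; apply: tcl_eq; apply: TE_scaleD.
Qed.

End Quot.

HB.instance Definition _ (k : fieldType) (A H : algType k) (s : A -> H) (L : lmodType k) (ra : L -> A -> L) (Z : L -> Prop) := gen_eqMixin (@tq k A H s L ra Z).
HB.instance Definition _ (k : fieldType) (A H : algType k) (s : A -> H) (L : lmodType k) (ra : L -> A -> L) (Z : L -> Prop) := gen_choiceMixin (@tq k A H s L ra Z).
HB.instance Definition _ (k : fieldType) (A H : algType k) (s : A -> H) (L : lmodType k) (ra : L -> A -> L) (Z : L -> Prop) := GRing.isZmodule.Build (@tq k A H s L ra Z)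
  (@tq_addA k A H s L ra Z) (@tq_addC k A H s L ra Z) (@tq_add0 k A H s L ra Z)
  (@tq_addN k A H s L ra Z).
HB.instance Definition _ (k : fieldType) (A H : algType k) (s : A -> H) (L : lmodType k) (ra : L -> A -> L) (Z : L -> Prop) := GRing.Zmodule_isLmodule.Build k (@tq k A H s L ra Z)
  (@tq_scaleA k A H s L ra Z) (@tq_scale1 k A H s L ra Z) (@tq_scaleDr k A H s L ra Z)
  (@tq_scaleDl k A H s L ra Z).

Section QuotTh.
Variables (k : fieldType) (A H : algType k) (s : A -> H) (L : lmodType k)
  (ra : L -> A -> L) (Z : L -> Prop).
Local Notation T := (@tq k A H s L ra Z).
Local Notation cl := (@tcl k A H s L ra Z).

Lemma clD u v : cl u + cl v = cl (u ++ v).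
Proof. exact: tq_addE. Qed.
Lemma cl0 : 0 = cl [::] :> T.
Proof. by []. Qed.
Lemma clZ c u : c *: cl u = cl (tsc c u).
Proof. exact: tq_scaleE. Qed.
Lemma clN u : - cl u = cl (negl u).
Proof.
apply: (addrI (cl u)); rewrite subrr clD; apply: tcl_eq.
by apply: TE_sym; apply: TE_neg.
Qed.
End QuotTh.


Definition subsp (k : fieldType) (V : lmodType k) (B : V -> Prop) :=
  B 0 /\ forall (c : k) x y, B x -> B y -> B (c *: x + y).

Section Sub.
Variables (k : fieldType) (V : lmodType k) (B : V -> Prop) (hB : subsp B).
Record sb := SB { sbv : V; sbp : B sbv }.

Lemma sb_eq (x y : sb) : sbv x = sbv y -> x = y.
Proof.
case: x y => x hx [y hy] /= e; subst.
by rewrite (Prop_irrelevance hx hy).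
Qed.

Lemma B_add x y : B x -> B y -> B (x + y).
Proof. by move=> hx hy; rewrite -[x]scale1r; apply: hB.2. Qed.
Lemma B_scale c x : B x -> B (c *: x).
Proof. by move=> hx; rewrite -[c *: x]addr0; apply: hB.2 => //; exact: hB.1. Qed.
Lemma B_opp x : B x -> B (- x).
Proof. by move=> hx; rewrite -scaleN1r; apply: B_scale. Qed.

Definition sb_add x y := SB (B_add (sbp x) (sbp y)).
Definition sb_opp x := SB (B_opp (sbp x)).
Definition sb_zero := SB hB.1.
Definition sb_scale c x := SB (B_scale c (sbp x)).

Lemma sb_addA : associative sb_add.
Proof. by move=> x y z; apply: sb_eq; rewrite /= addrA. Qed.
Lemma sb_addC : commutative sb_add.
Proof. by move=> x y; apply: sb_eq; rewrite /= addrC. Qed.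
Lemma sb_add0 : left_id sb_zero sb_add.
Proof. by move=> x; apply: sb_eq; rewrite /= add0r. Qed.
Lemma sb_addN : left_inverse sb_zero sb_opp sb_add.
Proof. by move=> x; apply: sb_eq; rewrite /= addNr. Qed.
Lemma sb_scaleA a b x : sb_scale a (sb_scale b x) = sb_scale (a * b) x.
Proof. by apply: sb_eq; rewrite /= scalerA. Qed.
Lemma sb_scale1 : left_id 1 sb_scale.
Proof. by move=> x; apply: sb_eq; rewrite /= scale1r. Qed.
Lemma sb_scaleDr : right_distributive sb_scale sb_add.
Proof. by move=> c x y; apply: sb_eq; rewrite /= scalerDr. Qed.
Lemma sb_scaleDl x : {morph sb_scale^~ x : a b / a + b >-> sb_add a b}.
Proof. by move=> a b; apply: sb_eq; rewrite /= scalerDl. Qed.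
End Sub.

Definition sbT (k : fieldType) (V : lmodType k) (B : V -> Prop) (hB : subsp B) := sb B.
HB.instance Definition _ (k : fieldType) (V : lmodType k) (B : V -> Prop) (hB : subsp B) :=
  gen_eqMixin (sbT hB).
HB.instance Definition _ (k : fieldType) (V : lmodType k) (B : V -> Prop) (hB : subsp B) :=
  gen_choiceMixin (sbT hB).
HB.instance Definition _ (k : fieldType) (V : lmodType k) (B : V -> Prop) (hB : subsp B) :=
  GRing.isZmodule.Build (sbT hB) (sb_addA hB) (sb_addC hB) (sb_add0 hB) (sb_addN hB).
HB.instance Definition _ (k : fieldType) (V : lmodType k) (B : V -> Prop) (hB : subsp B) :=
  GRing.Zmodule_isLmodule.Build k (sbT hB) (sb_scaleA hB) (sb_scale1 hB)
  (sb_scaleDr hB) (sb_scaleDl hB).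

Section SubTh.
Variables (k : fieldType) (V : lmodType k) (B : V -> Prop) (hB : subsp B).
Local Notation S := (sbT hB).
Lemma sbvD (x y : S) : sbv (x + y) = sbv x + sbv y. Proof. by []. Qed.
Lemma sbvZ c (x : S) : sbv (c *: x) = c *: sbv x. Proof. by []. Qed.
Lemma sbv0 : sbv (0 : S) = 0. Proof. by []. Qed.
Lemma sbv_inj : injective (fun x : S => sbv x).
Proof. by move=> x y; apply: sb_eq. Qed.
End SubTh.


Section Main.
Variables (k : fieldType) (A H : algType k) (s t : A -> H)
  (Delta : H -> seq (H * H)) (eps : H -> A).
Hypothesis hbi : left_bialgebroid s t Delta eps.

Lemma t_lin c x y : t (c *: x + y) = c *: t x + t y.
Proof. by case: hbi => [[_ [ht _ _] _] _ _]; apply: ht. Qed.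
Lemma t0 : t 0 = 0.
Proof. have := t_lin 1 0 0; rewrite !scale1r addr0 => h. by apply: (addrI (t 0)); rewrite addr0 -h. Qed.
Lemma tD x y : t (x + y) = t x + t y.
Proof. by have := t_lin 1 x y; rewrite !scale1r. Qed.
Lemma tZ c x : t (c *: x) = c *: t x.
Proof. by have := t_lin c x 0; rewrite !addr0 t0 addr0. Qed.
Lemma t1 : t 1 = 1.
Proof. by case: hbi => [[_ [_ ht _] _] _ _]. Qed.
Lemma tM x y : t (x * y) = t y * t x.
Proof. by case: hbi => [[_ [_ _ ht] _] _ _]. Qed.
Lemma s_lin c x y : s (c *: x + y) = c *: s x + s y.
Proof. by case: hbi => [[[hs _ _] _ _] _ _]; apply: hs. Qed.
Lemma s0 : s 0 = 0.
Proof. have := s_lin 1 0 0; rewrite !scale1r addr0 => h. by apply: (addrI (s 0)); rewrite addr0 -h. Qed.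
Lemma s1 : s 1 = 1.
Proof. by case: hbi => [[[_ hs _] _ _] _ _]. Qed.
Lemma sM x y : s (x * y) = s x * s y.
Proof. by case: hbi => [[[_ _ hs] _ _] _ _]. Qed.
Lemma st_comm a b : s a * t b = t b * s a.
Proof. by case: hbi => [[_ _ hc] _ _]. Qed.

Lemma Delta_lin c x y : teqHH s t (Delta (c *: x + y)) (tscale c (Delta x) ++ Delta y).
Proof. by case: hbi => [_ [h _ _ _ _] _]. Qed.
Lemma Delta_bil a b h : teqHH s t (Delta (s a * t b * h))
                           [seq (s a * p.1, t b * p.2) | p <- Delta h].
Proof. by case: hbi => [_ [_ hh _ _ _] _]. Qed.
Lemma eps_lin c x y : eps (c *: x + y) = c *: eps x + eps y.
Proof. by case: hbi => [_ [_ _ h _ _] _]. Qed.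
Lemma eps_bil a b h : eps (s a * t b * h) = a * eps h * b.
Proof. by case: hbi => [_ [_ _ _ hh _] _]. Qed.
Lemma coassoc x : teqB3 s t (@allH k H)
          (flatten [seq [seq (q.1, q.2, p.2) | q <- Delta p.1] | p <- Delta x])
          (flatten [seq [seq (p.1, q.1, q.2) | q <- Delta p.2] | p <- Delta x]).
Proof. by case: hbi => [_ [_ _ _ _ [h _ _]] _]. Qed.
Lemma counit_r x : \sum_(p <- Delta x) t (eps p.2) * p.1 = x.
Proof. by case: hbi => [_ [_ _ _ _ [_ _ h]] _]. Qed.
Lemma takeuchi x a : teqHH s t [seq (p.1 * t a, p.2) | p <- Delta x]
                         [seq (p.1, p.2 * s a) | p <- Delta x].
Proof. by case: hbi => [_ _ [h _ _ _ _]]. Qed.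
Lemma Delta_mul x y : teqHH s t (Delta (x * y))
          (flatten [seq [seq (p.1 * q.1, p.2 * q.2) | q <- Delta y] | p <- Delta x]).
Proof. by case: hbi => [_ _ [_ h _ _ _]]. Qed.
Lemma Delta1 : teqHH s t (Delta 1) [:: (1, 1)].
Proof. by case: hbi => [_ _ [_ _ h _ _]]. Qed.

Lemma eps0 : eps 0 = 0.
Proof. have := eps_lin 1 0 0; rewrite !scale1r addr0 => e. by apply: (addrI (eps 0)); rewrite addr0 -e. Qed.
Lemma epsD x y : eps (x + y) = eps x + eps y.
Proof. by have := eps_lin 1 x y; rewrite !scale1r. Qed.
Lemma epsZ c x : eps (c *: x) = c *: eps x.
Proof. by have := eps_lin c x 0; rewrite !addr0 eps0 addr0. Qed.
Lemma eps_s a h : eps (s a * h) = a * eps h.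
Proof. by have := eps_bil a 1 h; rewrite t1 !mulr1. Qed.
Lemma eps_t b h : eps (t b * h) = eps h * b.
Proof. by have := eps_bil 1 b h; rewrite s1 !mul1r. Qed.

Definition mapr (L : Type) (a : A) (u : seq (L * H)) := [seq (p.1, t a * p.2) | p <- u].

Section QAct.
Variables (L : lmodType k) (ra : L -> A -> L) (Z : L -> Prop).
Local Notation QEL := (@QE k A H s L ra Z).
Local Notation cl := (@tcl k A H s L ra Z).

Lemma QE_mapr a u v : QEL u v -> QEL (mapr a u) (mapr a v).
Proof.
move=> h.
rewrite /mapr -!(Fm_map (fun p => (p.1, t a * p.2))) /QE.
apply: TE_flat h.
- by move=> x x' y _ _ _ /=; apply: te_addl.
- by move=> x y y' _ _ _ /=; rewrite mulrDr; apply: te_addr.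
- by move=> c x y _ _ /=; rewrite -scalerAr; apply: te_scal.
- by move=> y _ _ /=; apply: te_zero.
- move=> a' x y _ _ _ _ /=.
  rewrite /Hl mulrA -st_comm -mulrA.
  by apply: te_bal.
- by move=> z y _ hz _ /=; apply: te_kill.
Qed.

Definition tqr (S : @tq k A H s L ra Z) (a : A) : @tq k A H s L ra Z :=
  cl (mapr a (trep S)).

Lemma tqrE u a : tqr (cl u) a = cl (mapr a u).
Proof. by apply: tcl_eq; apply: QE_mapr; apply: trep_cl. Qed.

Lemma tq_right_Amod : right_Amod tqr.
Proof.
split.
- elim/tq_ind => u; elim/tq_ind => v a.
  by rewrite clD !tqrE clD /mapr map_cat.
- elim/tq_ind => u a b; rewrite !tqrE clD; apply: tcl_eq.
  elim: u => [|[x y] u IH] /=; first exact: TE_refl.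
  apply: (TE_trans (v := [:: (x, t a * y); (x, t b * y)] ++ (mapr a u ++ mapr b u))).
    rewrite -cat1s; apply: TE_cat => //; rewrite tD mulrDl; apply: te_addr => //.
  by apply: TE_perm; rewrite /= perm_cons -cat1s perm_catCA.
- elim/tq_ind => u a b; rewrite !tqrE; congr tcl.
  by rewrite /mapr -map_comp; apply: eq_map => p /=; rewrite mulrA tM.
- elim/tq_ind => u; rewrite !tqrE; congr tcl.
  by rewrite /mapr; elim: u => //= [[x y] u] ->; rewrite t1 mul1r.
- move=> c; elim/tq_ind => u a; rewrite !(clZ, tqrE); split.
    apply: tcl_eq.
    have -> : mapr a (tsc c (trep (cl u))) = tsc c (mapr a (trep (cl u))).
      by elim: (trep _) => //= p w ->.
    by apply: TE_tsc; [exact: Hl_scal | apply: QE_mapr; apply: trep_cl].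
  apply: tcl_eq; elim: u => [|[x y] u IH] /=; first exact: TE_refl.
  rewrite -cat1s -[_ :: tsc _ _]cat1s; apply: TE_cat => //.
  by rewrite tZ -scalerAl; apply: TE_sym; apply: te_scal.
Qed.
End QAct.

Lemma Hr_right_Amod : right_Amod (Hr t).
Proof.
rewrite /Hr; split.
- by move=> x y a; rewrite mulrDr.
- by move=> x a b; rewrite tD mulrDl.
- by move=> x a b; rewrite mulrA tM.
- by move=> x; rewrite t1 mul1r.
- by move=> c x a; split; [rewrite scalerAr | rewrite tZ -scalerAl].
Qed.

End Main.


Section SubAlg.
Variables (k : fieldType) (A H : algType k) (s t : A -> H)
  (Delta : H -> seq (H * H)) (eps : H -> A).
Hypothesis hbi : left_bialgebroid s t Delta eps.
Variable I : H -> Prop.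
Hypothesis hI : left_ideal_coideal s t Delta eps I.

Local Notation HH := (tens_eq (Hr t) (Hl s) (fun _ : H => True) (fun _ : H => True) (@noneH k H)).
Local Notation QQ := (tens_eq (Hr t) (Hl s) (fun _ : H => True) (fun _ : H => True) I).

Lemma I0 : I 0. Proof. by case: hI. Qed.
Lemma I_lin c x y : I x -> I y -> I (c *: x + y). Proof. by case: hI => _ h _ _ _; apply: h. Qed.
Lemma I_left h x : I x -> I (h * x). Proof. by case: hI => _ _ hh _ _; apply: hh. Qed.

Lemma HH_QQ u v : HH u v -> QQ u v.
Proof. by apply: tens_eq_mono. Qed.

Lemma Delta0 : HH (Delta 0) [::].
Proof.
have h := Delta_lin hbi 1 0 0; rewrite scale1r addr0 in h.
have e : tscale 1 (Delta 0) = Delta 0.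
  by rewrite /tscale; elim: (Delta 0) => //= [[x y] w] ->; rewrite scale1r.
rewrite e in h.
by apply: TE_sym; apply: (@TE_cancel _ _ _ _ _ _ _ _ _ (Delta 0)); rewrite cat0s.
Qed.

Lemma coinv0 : coinv s t Delta I 0.
Proof.
rewrite /coinv /teqQH.
apply: TE_trans (HH_QQ Delta0) _.
by apply: TE_sym; apply: TE_zero2.
Qed.

Lemma coinv1 : coinv s t Delta I 1.
Proof. by apply: HH_QQ; apply: (Delta1 hbi). Qed.

Lemma coinv_lin c x y : coinv s t Delta I x -> coinv s t Delta I y ->
  coinv s t Delta I (c *: x + y).
Proof.
rewrite /coinv /teqQH => hx hy.
apply: TE_trans (HH_QQ (Delta_lin hbi c x y)) _.
apply: (@TE_trans _ _ _ _ _ _ _ _ (tsc c [:: (1, x)] ++ [:: (1, y)])).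
  by apply: TE_cat => //; apply: TE_tsc => //; exact: Hl_scal.
apply: (@TE_trans _ _ _ _ _ _ _ _ ([:: (1, c *: x)] ++ [:: (1, y)])).
  by apply: TE_cat; [apply: te_scal | apply: TE_refl].
by apply: TE_sym; apply: te_addr.
Qed.

Lemma coinv_t a : coinv s t Delta I (t a).
Proof.
rewrite /coinv /teqQH; apply: HH_QQ.
have h := Delta_bil hbi 1 a 1.
have e : s 1 * t a * 1 = t a by rewrite mulr1 (s1 hbi) mul1r.
rewrite e in h.
apply: TE_trans h _.
have -> : [seq (s 1 * p.1, t a * p.2) | p <- Delta 1] = mapr t a (Delta 1).
  by apply: eq_map => p; rewrite (s1 hbi) mul1r.
have := QE_mapr hbi a (Delta1 hbi); rewrite /= mulr1; apply.
Qed.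

Definition Act (w : seq (H * H)) (q : H * H) := [seq (p.1 * q.1, p.2 * q.2) | p <- w].

Lemma Act_resp x u v : QQ u v -> QQ (Fm (Act (Delta x)) u) (Fm (Act (Delta x)) v).
Proof.
apply: TE_flat.
- move=> y y' z _ _ _; apply: TE_pw2 => p /=; rewrite mulrDr; exact: te_addl.
- move=> y z z' _ _ _; apply: TE_pw2 => p /=; rewrite mulrDr; exact: te_addr.
- move=> c y z _ _; apply: TE_pw => p /=; rewrite -!scalerAr; exact: te_scal.
- move=> z _ _; apply: TE_pw_nil => p /=; rewrite mulr0; exact: te_zero.
- move=> a y z _ _ _ _; rewrite /Act /Hr /Hl.
  apply: HH_QQ.
  have := TE_flat (f := fun p : H * H => [:: (p.1 * y, p.2 * z)]) _ _ _ _ _ _ (takeuchi hbi x a).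
  rewrite !Fm_map -!map_comp.
  have e1 : (fun p : H * H => (p.1 * (t a * y), p.2 * z)) =1
            (fun p => (p.1 * y, p.2 * z)) \o (fun p => (p.1 * t a, p.2)).
    by move=> p /=; rewrite mulrA.
  have e2 : (fun p : H * H => (p.1 * y, p.2 * (s a * z))) =1
            (fun p => (p.1 * y, p.2 * z)) \o (fun p => (p.1, p.2 * s a)).
    by move=> p /=; rewrite mulrA.
  rewrite (eq_map e1) (eq_map e2); apply.
  + by move=> x1 x2 y0 _ _ _ /=; rewrite mulrDl; apply: te_addl.
  + by move=> x1 y1 y2 _ _ _ /=; rewrite mulrDl; apply: te_addr.
  + by move=> c x1 y1 _ _ /=; rewrite -!scalerAl; apply: te_scal.
  + by move=> y1 _ _ /=; rewrite mul0r; apply: te_zero.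
  + by move=> b x1 y1 _ _ _ _ /=; rewrite /Hr /Hl -!mulrA; apply: te_bal.
  + by [].
- move=> z y0 _ hz _; apply: TE_pw_nil => p /=; apply: te_kill => //.
  exact: I_left.
Qed.

Lemma Rr_resp y u v : QQ u v ->
  QQ (Fm (fun p : H * H => [:: (p.1, p.2 * y)]) u) (Fm (fun p : H * H => [:: (p.1, p.2 * y)]) v).
Proof.
apply: TE_flat.
- by move=> *; apply: te_addl.
- by move=> *; rewrite /= mulrDl; apply: te_addr.
- by move=> *; rewrite /= -scalerAl; apply: te_scal.
- by move=> *; apply: te_zero.
- by move=> *; rewrite /= /Hl -mulrA; apply: te_bal.
- by move=> *; apply: te_kill.
Qed.

Lemma coinv_mul x y : coinv s t Delta I x -> coinv s t Delta I y ->
  coinv s t Delta I (x * y).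
Proof.
rewrite /coinv /teqQH => hx hy.
apply: TE_trans (HH_QQ (Delta_mul hbi x y)) _.
apply: (@TE_trans _ _ _ _ _ _ _ _
   (flatten [seq [seq (p.1 * q.1, p.2 * q.2) | p <- Delta x] | q <- Delta y])).
  by apply: TE_perm; apply: (perm_flatten_swap (fun p q : H * H => (p.1 * q.1, p.2 * q.2))).
have := Act_resp x hy; rewrite Fm1 => h.
apply: TE_trans h _.
have -> : Act (Delta x) (1, y) = Fm (fun p : H * H => [:: (p.1, p.2 * y)]) (Delta x).
  by rewrite Fm_map; apply: eq_map => p /=; rewrite mulr1.
have := Rr_resp y hx; rewrite Fm1 //.
Qed.

Lemma coinv_subsp : subsp (coinv s t Delta I).
Proof. by split; [exact: coinv0 | exact: coinv_lin]. Qed.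

End SubAlg.

Lemma coinv_mono (k : fieldType) (A H : algType k) (s t : A -> H)
  (Delta : H -> seq (H * H)) (I J : H -> Prop) :
  (forall x, I x -> J x) -> forall x, coinv s t Delta I x -> coinv s t Delta J x.
Proof. by move=> hIJ x; apply: tens_eq_mono. Qed.


Section TE3Flat.
Variables (k : fieldType) (A : Type) (L M R : lmodType k)
  (r1 : L -> A -> L) (l2 : A -> M -> M) (r2 : M -> A -> M) (l3 : A -> R -> R)
  (P1 : L -> Prop).
Variables (A' : Type) (L' R' : lmodType k) (ra' : L' -> A' -> L')
  (la' : A' -> R' -> R') (Z' : L' -> Prop) (f : L * M * R -> seq (L' * R')).
Local Notation TE' := (tens_eq ra' la' (fun _ : L' => True) (fun _ : R' => True) Z').
Hypotheses
 (Hadd1 : forall x x' y z, P1 x -> P1 x' -> TE' (f (x + x', y, z)) (f (x, y, z) ++ f (x', y, z)))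
 (Hadd2 : forall x y y' z, P1 x -> TE' (f (x, y + y', z)) (f (x, y, z) ++ f (x, y', z)))
 (Hadd3 : forall x y z z', P1 x -> TE' (f (x, y, z + z')) (f (x, y, z) ++ f (x, y, z')))
 (Hscal12 : forall c x y z, P1 x -> TE' (f (c *: x, y, z)) (f (x, c *: y, z)))
 (Hscal23 : forall c x y z, P1 x -> TE' (f (x, c *: y, z)) (f (x, y, c *: z)))
 (Hzero : forall y z, P1 0 -> TE' (f (0, y, z)) [::])
 (Hbal12 : forall a x y z, P1 x -> P1 (r1 x a) -> TE' (f (r1 x a, y, z)) (f (x, l2 a y, z)))
 (Hbal23 : forall a x y z, P1 x -> TE' (f (x, r2 y a, z)) (f (x, y, l3 a z))).

Lemma TE3_flat u v : tens3_eq r1 l2 r2 l3 P1 u v -> TE' (Fm f u) (Fm f v).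
Proof.
move=> h.
apply: (flat3_resp (Wp := fun _ => True) (E := fun u v => TE' u v)) h => //.
- by move=> *; apply: TE_refl.
- exact: TE_sym.
- exact: TE_trans.
- exact: TE_cat.
- by move=> *; apply: TE_comm.
Qed.
End TE3Flat.

Lemma Fm_pw (S T : Type) (E : seq T -> seq T -> Prop) (f g : S -> seq T) w :
  E [::] [::] ->
  (forall a b c d, E a b -> E c d -> E (a ++ c) (b ++ d)) ->
  (forall p, E (f p) (g p)) -> E (Fm f w) (Fm g w).
Proof.
move=> h0 hc h; elim: w => [|p w IH] //.
by rewrite /Fm /=; apply: hc.
Qed.

Lemma Fm_flatten (S T U : Type) (f : T -> seq U) (G : S -> seq T) w :
  Fm f (flatten (map G w)) = Fm (fun p => Fm f (G p)) w.
Proof. by elim: w => //= p w IH; rewrite Fm_cat IH /Fm /=. Qed.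

Lemma Fm_mapc (S T U : Type) (f : T -> seq U) (g : S -> T) w :
  Fm f (map g w) = Fm (f \o g) w.
Proof. by rewrite /Fm -map_comp. Qed.

Section SubAct.
Variables (k : fieldType) (A : algType k) (V : lmodType k) (rV : V -> A -> V)
  (B : V -> Prop) (hB : subsp B) (hr : forall x a, B x -> B (rV x a)).

Definition sbr (x : sbT hB) (a : A) : sbT hB := SB (hr a (sbp x)).

Lemma sbr_right_Amod : right_Amod rV -> right_Amod sbr.
Proof.
case=> h1 h2 h3 h4 h5; split.
- by move=> x y a; apply: sb_eq; rewrite /= h1.
- by move=> x a b; apply: sb_eq; rewrite /= h2.
- by move=> x a b; apply: sb_eq; rewrite /= h3.
- by move=> x; apply: sb_eq; rewrite /= h4.
- by move=> c x a; have [e1 e2] := h5 c (sbv x) a; split; apply: sb_eq; rewrite /= ?e1 ?e2.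
Qed.
End SubAct.

Section FlatSub.
Variables (k : fieldType) (A H : algType k) (s : A -> H).
Hypothesis hflat : sH_flat s.
Variables (V : lmodType k) (rV : V -> A -> V) (hV : right_Amod rV)
  (B : V -> Prop) (hB : subsp B) (hr : forall x a, B x -> B (rV x a)).

Lemma flat_sub (u v : seq (sbT hB * H)) :
  tens_eq rV (Hl s) (fun _ => True) (@allH k H) (fun _ => False)
     [seq (sbv p.1, p.2) | p <- u] [seq (sbv p.1, p.2) | p <- v] ->
  tens_eq (sbr hr) (Hl s) (fun _ => True) (@allH k H) (fun _ => False) u v.
Proof.
apply: (hflat (f := fun x : sbT hB => sbv x)).
- exact: sbr_right_Amod.
- exact: hV.
- by [].
- by [].
- exact: sbv_inj.
Qed.
End FlatSub.


Section RightExact.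
Variables (k : fieldType) (A : Type) (L R : lmodType k) (ra : L -> A -> L)
  (la : A -> R -> R) (B : L -> Prop) (hB : subsp B).
Local Notation TB := (tens_eq ra la (fun _ : L => True) (fun _ : R => True) B).
Local Notation T0 := (tens_eq ra la (fun _ : L => True) (fun _ : R => True) (fun _ => False)).

Lemma right_exact u v : TB u v ->
  exists z, (forall p, p \in z -> B p.1) /\ T0 u (v ++ z).
Proof.
have base u' v' : T0 u' v' -> exists z, (forall p, p \in z -> B p.1) /\ T0 u' (v' ++ z).
  by move=> h; exists [::]; split => //; rewrite cats0.
elim=> {u v}.
- by move=> s0 _; apply: base; apply: TE_refl.
- move=> s1 s2 _ [z [hz h]]; exists (negl z); split.
    by move=> p /mapP [q qz ->] /=; apply: B_opp => //; apply: hz.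
  apply: (@TE_trans _ _ _ _ _ _ _ _ (s2 ++ (z ++ negl z))).
    by rewrite -{1}[s2]cats0; apply: TE_catl; apply: TE_sym; apply: TE_neg.
  by rewrite catA; apply: TE_catr; apply: TE_sym.
- move=> s1 s2 s3 _ [z1 [hz1 h1]] _ [z2 [hz2 h2]]; exists (z2 ++ z1); split.
    by move=> p; rewrite mem_cat => /orP [/hz2|/hz1].
  by rewrite catA; apply: TE_trans h1 _; apply: TE_catr.
- move=> s1 s2 s3 s4 _ [z1 [hz1 h1]] _ [z2 [hz2 h2]]; exists (z1 ++ z2); split.
    by move=> p; rewrite mem_cat => /orP [/hz1|/hz2].
  apply: TE_trans (TE_cat h1 h2) _; apply: TE_perm.
  by rewrite -!catA perm_cat2l perm_catCA.
- by move=> s1 s2 _ _; apply: base; apply: TE_comm.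
- by move=> *; apply: base; apply: te_addl.
- by move=> *; apply: base; apply: te_addr.
- by move=> *; apply: base; apply: te_scal.
- by move=> *; apply: base; apply: te_zero.
- by move=> *; apply: base; apply: te_bal.
- move=> z y _ hz _; exists [:: (z, y)]; split; last by apply: TE_refl.
  by move=> p; rewrite inE => /eqP ->.
Qed.
End RightExact.


Section Psi.
Variables (k : fieldType) (A H : algType k) (s t : A -> H)
  (Delta : H -> seq (H * H)) (eps : H -> A).
Hypothesis hbi : left_bialgebroid s t Delta eps.
Variable Z : H -> Prop.
Local Notation N := (@tq k A H s H (Hr t) Z).
Local Notation cl := (@tcl k A H s H (Hr t) Z).
Local Notation rN := (@tqr k A H s t H (Hr t) Z).
Local Notation TN := (tens_eq rN (Hl s) (fun _ : N => True) (fun _ : H => True) (fun _ => False)).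
Local Notation QZ := (tens_eq (Hr t) (Hl s) (fun _ : H => True) (fun _ : H => True) Z).

Lemma cl_addl x x' y : cl [:: (x + x', y)] = cl [:: (x, y)] + cl [:: (x', y)].
Proof. by rewrite clD; apply: tcl_eq; apply: te_addl. Qed.
Lemma cl_addr x y y' : cl [:: (x, y + y')] = cl [:: (x, y)] + cl [:: (x, y')].
Proof. by rewrite clD; apply: tcl_eq; apply: te_addr. Qed.
Lemma cl_scal1 c x y : cl [:: (c *: x, y)] = c *: cl [:: (x, y)].
Proof. by rewrite clZ. Qed.
Lemma cl_scal2 c x y : cl [:: (x, c *: y)] = c *: cl [:: (x, y)].
Proof. by rewrite clZ; apply: tcl_eq; apply: TE_sym; apply: te_scal. Qed.
Lemma cl_zero1 y : cl [:: (0, y)] = 0.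
Proof. by apply: tcl_eq; apply: te_zero. Qed.
Lemma cl_zero2 x : cl [:: (x, 0)] = 0.
Proof. by apply: tcl_eq; apply: TE_zero2. Qed.
Lemma cl_bal a x y : cl [:: (t a * x, y)] = cl [:: (x, s a * y)].
Proof. by apply: tcl_eq; apply: (te_bal (ra := Hr t) (la := Hl s)). Qed.
Lemma cl_r a x y : cl [:: (x, t a * y)] = rN (cl [:: (x, y)]) a.
Proof. by rewrite (tqrE hbi). Qed.
Lemma cl_kill x y : Z x -> cl [:: (x, y)] = 0.
Proof. by move=> hx; apply: tcl_eq; apply: te_kill. Qed.

Definition Psi (p : H * H * H) : seq (N * H) := [:: (cl [:: (p.1.1, p.1.2)], p.2)].

Lemma Psi_resp u v : teqB3 s t (@allH k H) u v -> TN (Fm Psi u) (Fm Psi v).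
Proof.
apply: TE3_flat.
- by move=> *; rewrite /Psi /= cl_addl; apply: te_addl.
- by move=> *; rewrite /Psi /= cl_addr; apply: te_addl.
- by move=> *; rewrite /Psi /=; apply: te_addr.
- by move=> *; rewrite /Psi /= cl_scal1 cl_scal2; apply: TE_refl.
- by move=> *; rewrite /Psi /= cl_scal2; apply: te_scal.
- by move=> *; rewrite /Psi /= cl_zero1; apply: te_zero.
- by move=> a x y z _ _; rewrite /Psi /= /Hr cl_bal; apply: TE_refl.
- by move=> a x y z _; rewrite /Psi /= /Hr cl_r; apply: te_bal.
Qed.

Lemma cl_split u y : TN [:: (cl u, y)] [seq (cl [:: a], y) | a <- u].
Proof.
elim: u => [|a u IH] /=; first by apply: te_zero.
have -> : cl (a :: u) = cl [:: a] + cl u by rewrite clD.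
apply: (@TE_trans _ _ _ _ _ _ _ _ ([:: (cl [:: a], y)] ++ [:: (cl u, y)])).
  by apply: te_addl.
by apply: TE_catl.
Qed.

Definition Theta' (q : H) (p : H * H) : seq (N * H) := [:: (cl [:: (q, p.1)], p.2)].
Definition Theta (p : H * H) : seq (N * H) := Fm (Theta' p.1) (Delta p.2).

Lemma Theta'_resp q u v : teqHH s t u v -> TN (Fm (Theta' q) u) (Fm (Theta' q) v).
Proof.
apply: TE_flat.
- by move=> *; rewrite /Theta' /= cl_addr; apply: te_addl.
- by move=> *; rewrite /Theta' /=; apply: te_addr.
- by move=> *; rewrite /Theta' /= cl_scal2; apply: te_scal.
- by move=> *; rewrite /Theta' /= cl_zero2; apply: te_zero.
- by move=> *; rewrite /Theta' /= /Hr cl_r; apply: te_bal.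
- by [].
Qed.

Lemma Delta_add x y : teqHH s t (Delta (x + y)) (Delta x ++ Delta y).
Proof.
have h := Delta_lin hbi 1 x y; rewrite scale1r in h.
have e : tscale 1 (Delta x) = Delta x.
  by rewrite /tscale; elim: (Delta x) => //= [[a b] w] ->; rewrite scale1r.
by rewrite e in h.
Qed.

Lemma Delta_scale c x : teqHH s t (Delta (c *: x)) (tscale c (Delta x)).
Proof.
have h := Delta_lin hbi c x 0; rewrite addr0 in h.
apply: TE_trans h _.
by rewrite -{2}[tscale c _]cats0; apply: TE_catl; apply: (Delta0 hbi).
Qed.

Lemma Delta_sl a h : teqHH s t (Delta (s a * h)) [seq (s a * p.1, p.2) | p <- Delta h].
Proof.
have h' := Delta_bil hbi a 1 h.
rewrite (t1 hbi) mulr1 in h'.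
apply: TE_trans h' _; apply: TE_eq.
by apply: eq_map => p; rewrite mul1r.
Qed.

Lemma Theta_resp u v : QZ u v -> TN (Fm Theta u) (Fm Theta v).
Proof.
apply: TE_flat.
- move=> x x' y _ _ _; rewrite /Theta /Theta' /= !Fm_map.
  by apply: TE_pw2 => p; rewrite cl_addl; apply: te_addl.
- by move=> x y y' _ _ _; rewrite /Theta /= -Fm_cat; apply: Theta'_resp; apply: Delta_add.
- move=> c x y _ _; rewrite /Theta /=.
  apply: TE_trans (TE_sym (Theta'_resp x (Delta_scale c y))).
  rewrite /tscale Fm_mapc !Fm_map; apply: TE_eq; apply: eq_map => p /=.
  by rewrite cl_scal1 cl_scal2.
- move=> y _ _; rewrite /Theta /= Fm_map; apply: TE_pw_nil => p.
  by rewrite cl_zero1; apply: te_zero.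
- move=> a x y _ _ _ _; rewrite /Theta /= /Hr /Hl.
  apply: TE_trans (TE_sym (Theta'_resp x (Delta_sl a y))).
  rewrite Fm_mapc !Fm_map; apply: TE_eq; apply: eq_map => p /=.
  by rewrite cl_bal.
- move=> z y _ hz _; rewrite /Theta /= Fm_map; apply: TE_pw_nil => p.
  by rewrite cl_kill //; apply: te_zero.
Qed.

End Psi.


Section Exist.
Variables (k : fieldType) (A H : algType k) (s t : A -> H)
  (Delta : H -> seq (H * H)) (eps : H -> A).
Hypothesis hbi : left_bialgebroid s t Delta eps.
Hypothesis hflat : sH_flat s.
Variable I : H -> Prop.
Hypothesis hI : left_ideal_coideal s t Delta eps I.
Local Notation N := (@tq k A H s H (Hr t) I).
Local Notation cl := (@tcl k A H s H (Hr t) I).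
Local Notation rN := (@tqr k A H s t H (Hr t) I).
Local Notation TN := (tens_eq rN (Hl s) (fun _ : N => True) (fun _ : H => True) (fun _ => False)).
Local Notation QQ := (tens_eq (Hr t) (Hl s) (fun _ : H => True) (fun _ : H => True) I).
Local Notation B := (coinv s t Delta I).
Local Notation TB := (tens_eq (Hr t) (Hl s) (fun _ : H => True) (fun _ : H => True) B).

Definition phi (x : H) : N := cl (Delta x ++ [:: (-1, x)]).

Lemma phi_lin c x y : phi (c *: x + y) = c *: phi x + phi y.
Proof.
rewrite /phi clZ clD; apply: tcl_eq; rewrite /QE.
apply: (@TE_trans _ _ _ _ _ _ _ _ ((tsc c (Delta x) ++ Delta y) ++ [:: (-1, c *: x); (-1, y)])).
  apply: TE_cat; last by apply: te_addr.
  exact: (HH_QQ I (Delta_lin hbi c x y)).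
apply: (@TE_trans _ _ _ _ _ _ _ _ ((tsc c (Delta x) ++ Delta y) ++ [:: (c *: -1, x); (-1, y)])).
  apply: TE_catl; rewrite -cat1s -[[:: (c *: -1, x); _]]cat1s; apply: TE_catr.
  by apply: TE_sym; apply: te_scal.
apply: TE_perm; rewrite /tsc map_cat /= -!catA perm_cat2l.
by rewrite -cat1s perm_catCA.
Qed.

Lemma phi0 : phi 0 = 0.
Proof.
have := phi_lin 1 0 0; rewrite !scale1r addr0 => e.
by apply: (addrI (phi 0)); rewrite addr0 -e.
Qed.

Lemma phiZ c x : phi (c *: x) = c *: phi x.
Proof. by have := phi_lin c x 0; rewrite addr0 phi0 addr0. Qed.
Lemma phiD x y : phi (x + y) = phi x + phi y.
Proof. by have := phi_lin 1 x y; rewrite !scale1r. Qed.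

Lemma phi_t a x : phi (t a * x) = rN (phi x) a.
Proof.
rewrite /phi (tqrE hbi) /mapr map_cat /=; apply: tcl_eq; apply: TE_catr.
apply: HH_QQ.
have h := Delta_bil hbi 1 a x.
have e : s 1 * t a * x = t a * x by rewrite (s1 hbi) mul1r.
rewrite e in h; apply: TE_trans h _; apply: TE_eq.
by apply: eq_map => p; rewrite (s1 hbi) mul1r.
Qed.

Lemma phi0_B x : phi x = 0 -> B x.
Proof.
move=> e; have := tcl_inj e => h.
rewrite /coinv /teqQH.
apply: (@TE_cancel _ _ _ _ _ _ _ _ _ [:: (-1, x)]).
apply: TE_trans h _; apply: TE_sym.
exact: (@TE_neg _ _ _ _ (Hr t) (Hl s) I [:: (1, x)]).
Qed.

Lemma phi_eq_B x y : phi x = phi y -> B (x - y).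
Proof.
move=> e; apply: phi0_B.
by rewrite -scaleN1r addrC phi_lin e scaleN1r addNr.
Qed.

Lemma TB_phi x y z : phi x = phi y -> TB [:: (x, z)] [:: (y, z)].
Proof.
move=> /phi_eq_B hb.
apply: (@TE_trans _ _ _ _ _ _ _ _ [:: (y + (x - y), z)]).
  by rewrite addrC subrK; apply: TE_refl.
apply: (@TE_trans _ _ _ _ _ _ _ _ ([:: (y, z)] ++ [:: (x - y, z)])).
  by apply: te_addl.
by rewrite -{2}[[:: (y, z)]]cats0; apply: TE_catl; apply: te_kill.
Qed.

Definition Imphi (n : N) := exists h, n = phi h.

Lemma Imphi_subsp : subsp Imphi.
Proof.
split; first by exists 0; rewrite phi0.
by move=> c _ _ [x ->] [y ->]; exists (c *: x + y); rewrite phi_lin.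
Qed.

Lemma Imphi_r n a : Imphi n -> Imphi (rN n a).
Proof. by move=> [x ->]; exists (t a * x); rewrite phi_t. Qed.

Local Notation M := (sbT Imphi_subsp).
Local Notation rM := (sbr Imphi_r).
Local Notation TM := (tens_eq rM (Hl s) (fun _ : M => True) (@allH k H) (fun _ => False)).

Definition gM (h : H) : M := SB (ex_intro (fun h' => phi h = phi h') h erefl).
Definition sig (m : M) : H := proj1_sig (cid (sbp m)).
Lemma sigP (m : M) : sbv m = phi (sig m).
Proof. by rewrite /sig; case: (cid (sbp m)). Qed.

Lemma lift_resp u v : TM u v ->
  TB [seq (sig p.1, p.2) | p <- u] [seq (sig p.1, p.2) | p <- v].
Proof.
move=> h; rewrite -!(Fm_map (fun p : M * H => (sig p.1, p.2))).
apply: TE_flat h.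
- move=> m m' y _ _ _ /=.
  apply: (@TE_trans _ _ _ _ _ _ _ _ [:: (sig m + sig m', y)]); last by apply: te_addl.
  by apply: TB_phi; rewrite -sigP phiD -!sigP.
- by move=> *; apply: te_addr.
- move=> c m y _ _ /=.
  apply: (@TE_trans _ _ _ _ _ _ _ _ [:: (c *: sig m, y)]); last by apply: te_scal.
  by apply: TB_phi; rewrite -sigP phiZ -!sigP.
- move=> y _ _ /=.
  apply: (@TE_trans _ _ _ _ _ _ _ _ [:: (0, y)]); last by apply: te_zero.
  by apply: TB_phi; rewrite -sigP phi0.
- move=> a m y _ _ _ _ /=.
  apply: (@TE_trans _ _ _ _ _ _ _ _ [:: (Hr t (sig m) a, y)]); last by apply: te_bal.
  by apply: TB_phi; rewrite -sigP /Hr phi_t -sigP.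
- by [].
Qed.

Lemma key b : B b -> TN [seq (phi p.1, p.2) | p <- Delta b] [::].
Proof.
move=> hb.
set X := [seq (cl [:: (1, r.1)], r.2) | r <- Delta b].
set LHS3 := flatten [seq [seq (q.1, q.2, p.2) | q <- Delta p.1] | p <- Delta b].
set RHS3 := flatten [seq [seq (p.1, q.1, q.2) | q <- Delta p.2] | p <- Delta b].
apply: (@TE_trans _ _ _ _ _ _ _ _ (Fm (Psi s t I) LHS3 ++ negl X)); last first.
  apply: (@TE_trans _ _ _ _ _ _ _ _ (X ++ negl X)); last exact: TE_neg.
  apply: TE_catr.
  apply: TE_trans (Psi_resp hbi I (coassoc hbi b)) _.
  have -> : Fm (Psi s t I) RHS3 = Fm (Theta s t Delta I) (Delta b).
    rewrite /RHS3 Fm_flatten /Fm; congr flatten; apply: eq_map => p /=.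
    by rewrite -/(Fm _ _) Fm_mapc /Theta.
  apply: TE_trans (Theta_resp hbi hb) _.
  by rewrite Fm1 /Theta /Theta' Fm_map; apply: TE_refl.
apply: (@TE_trans _ _ _ _ _ _ _ _
  (Fm (fun p : H * H => Fm (Psi s t I) [seq (q.1, q.2, p.2) | q <- Delta p.1] ++
                        [:: (cl [:: (-1, p.1)], p.2)]) (Delta b))).
  rewrite -(Fm_map (fun p : H * H => (phi p.1, p.2))).
  apply: Fm_pw; [exact: TE_refl | exact: TE_cat | move=> p].
  rewrite /phi; apply: TE_trans (cl_split s t I _ _) _.
  rewrite map_cat; apply: TE_catr.
  rewrite Fm_mapc; apply: TE_eq; rewrite -(Fm_map (fun a => (cl [:: a], p.2))).
  by rewrite /Fm; congr flatten; apply: eq_map => -[].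
apply: TE_perm.
apply: perm_trans (perm_flatten_cat _ _ _) _.
rewrite /LHS3 Fm_flatten /Fm perm_cat2l /X /negl -map_comp.
rewrite (_ : flatten _ = [seq (cl [:: (-1, x.1)], x.2) | x <- Delta b]).
  have E : forall x : H * H, (cl [:: (-1, x.1)], x.2) =
    ((fun p : N * H => (- p.1, p.2)) \o (fun r : H * H => (cl [:: (1, r.1)], r.2))) x.
    by move=> x; rewrite /= clN.
  by rewrite (eq_map E) perm_refl.
by rewrite -(Fm_map (fun x : H * H => (cl [:: (-1, x.1)], x.2))).
Qed.

Lemma Delta_in_B b : B b ->
  exists z, (forall p, p \in z -> B p.1) /\ teqHH s t (Delta b) z.
Proof.
move=> hb.
have hM : TM [seq (gM p.1, p.2) | p <- Delta b] [::].
  apply: (flat_sub hflat (tq_right_Amod hbi (Hr t) I)).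
  by rewrite -map_comp; apply: key.
have h1 := lift_resp hM; rewrite /= in h1.
have h2 : TB (Delta b) [::].
  apply: TE_trans h1.
  rewrite -map_comp; rewrite -{1}[Delta b]map_id; apply: TE_pw => -[x y] /=.
  by apply: TB_phi; rewrite -sigP.
have [z [hz h3]] := right_exact (coinv_subsp hbi I) h2.
by exists z; split.
Qed.

End Exist.


Section EqvPw.
Variables (T : eqType) (Wp : T -> Prop) (E : seq T -> seq T -> Prop).
Hypotheses (Erefl : forall u, Wl Wp u -> E u u)
  (Esym : forall u v, E u v -> E v u)
  (Etrans : forall u v w, E u v -> E v w -> E u w)
  (Ecat : forall a b c d, E a b -> E c d -> E (a ++ c) (b ++ d))
  (Ecomm : forall u v, Wl Wp u -> Wl Wp v -> E (u ++ v) (v ++ u)).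

Lemma E_nil : E [::] [::].
Proof. by apply: Erefl. Qed.

Lemma E_Fm_pw (X : Type) (f g : X -> seq T) w :
  (forall p, E (f p) (g p)) -> E (Fm f w) (Fm g w).
Proof. by move=> h; apply: Fm_pw => //; apply: E_nil. Qed.

Lemma E_pw (X : Type) (F G : X -> T) w :
  (forall p, E [:: F p] [:: G p]) -> E (map F w) (map G w).
Proof. by move=> h; rewrite -!Fm_map; apply: E_Fm_pw. Qed.

Lemma E_pw_nil (X : Type) (F : X -> T) w :
  (forall p, E [:: F p] [::]) -> E (map F w) [::].
Proof.
move=> h; elim: w => [|p w IH] /=; first exact: E_nil.
by rewrite -cat1s -[[::]]cat0s; apply: Ecat.
Qed.

Lemma E_pw2 (X : eqType) (F G1 G2 : X -> T) w :
  (forall p, Wp (G1 p) /\ Wp (G2 p)) ->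
  (forall p, E [:: F p] [:: G1 p; G2 p]) -> E (map F w) (map G1 w ++ map G2 w).
Proof.
move=> hw h; apply: (@Etrans _ (flatten [seq [:: G1 p] ++ [:: G2 p] | p <- w])).
  elim: w => [|p w IH] /=; first exact: E_nil.
  exact: (Ecat (h p) IH).
apply: (E_perm' Erefl Etrans Ecat Ecomm).
  by move=> q; rewrite mem_cat => /orP [] /mapP [p _ ->]; case: (hw p).
apply: perm_trans (perm_flatten_cat (fun p => [:: G1 p]) (fun p => [:: G2 p]) w) _.
by rewrite -(Fm_map G1 w) -(Fm_map G2 w) /Fm perm_refl.
Qed.
End EqvPw.

Section T3.
Variables (k : fieldType) (A : Type) (L M R : lmodType k)
  (r1 : L -> A -> L) (l2 : A -> M -> M) (r2 : M -> A -> M) (l3 : A -> R -> R)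
  (P1 : L -> Prop).
Local Notation T3 := (tens3_eq r1 l2 r2 l3 P1).
Local Notation Wp := (fun p : L * M * R => P1 p.1.1).

Lemma T3_refl u : wf3 P1 u -> T3 u u. Proof. exact: t3_refl. Qed.
Lemma T3_comm u v : Wl Wp u -> Wl Wp v -> T3 (u ++ v) (v ++ u). Proof. exact: t3_comm. Qed.

Definition T3h := (fun u (h : Wl Wp u) => T3_refl h, @t3_sym _ _ _ _ _ r1 l2 r2 l3 P1,
   @t3_trans _ _ _ _ _ r1 l2 r2 l3 P1, @t3_cat _ _ _ _ _ r1 l2 r2 l3 P1, T3_comm).

Lemma T3_Fm_pw (X : Type) (f g : X -> seq (L * M * R)) w :
  (forall p, T3 (f p) (g p)) -> T3 (Fm f w) (Fm g w).
Proof.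
apply: (E_Fm_pw (Wp := Wp)) => //.
- exact: T3_refl.
- exact: t3_cat.
Qed.

Lemma T3_pw (X : Type) (F G : X -> L * M * R) w :
  (forall p, T3 [:: F p] [:: G p]) -> T3 (map F w) (map G w).
Proof.
apply: (E_pw (Wp := Wp)) => //.
- exact: T3_refl.
- exact: t3_cat.
Qed.

Lemma T3_pw_nil (X : Type) (F : X -> L * M * R) w :
  (forall p, T3 [:: F p] [::]) -> T3 (map F w) [::].
Proof.
apply: (E_pw_nil (Wp := Wp)) => //.
- exact: T3_refl.
- exact: t3_cat.
Qed.

Lemma T3_pw2 (X : eqType) (F G1 G2 : X -> L * M * R) w :
  (forall p, P1 (G1 p).1.1 /\ P1 (G2 p).1.1) ->
  (forall p, T3 [:: F p] [:: G1 p; G2 p]) -> T3 (map F w) (map G1 w ++ map G2 w).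
Proof.
apply: (E_pw2 (Wp := Wp)).
- exact: T3_refl.
- exact: t3_trans.
- exact: t3_cat.
- exact: t3_comm.
Qed.

Variables (A' : Type) (L' R' : lmodType k) (ra : L' -> A' -> L') (la : A' -> R' -> R')
  (P : L' -> Prop) (Q : R' -> Prop) (Z : L' -> Prop) (f : L' * R' -> seq (L * M * R)).
Hypothesis Wf : forall p, P p.1 -> Q p.2 -> wf3 P1 (f p).
Hypotheses
 (Haddl : forall x x' y, P x -> P x' -> Q y -> T3 (f (x + x', y)) (f (x, y) ++ f (x', y)))
 (Haddr : forall x y y', P x -> Q y -> Q y' -> T3 (f (x, y + y')) (f (x, y) ++ f (x, y')))
 (Hscal : forall c x y, P x -> Q y -> T3 (f (c *: x, y)) (f (x, c *: y)))
 (Hzero : forall y, P 0 -> Q y -> T3 (f (0, y)) [::])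
 (Hbal : forall a x y, P x -> Q y -> P (ra x a) -> Q (la a y) ->
     T3 (f (ra x a, y)) (f (x, la a y)))
 (Hkill : forall z y, P z -> Z z -> Q y -> T3 (f (z, y)) [::]).

Lemma T3_flat u v : tens_eq ra la P Q Z u v -> T3 (Fm f u) (Fm f v).
Proof.
apply: (flat_resp (Wp := Wp)) => //.
- exact: T3_refl.
- exact: t3_sym.
- exact: t3_trans.
- exact: t3_cat.
- exact: t3_comm.
Qed.
End T3.

Lemma tens_eq_weakP (k : fieldType) (A : Type) (L R : lmodType k) (ra : L -> A -> L)
  (la : A -> R -> R) (P : L -> Prop) (Q : R -> Prop) (Z : L -> Prop) u v :
  tens_eq ra la P Q Z u v -> tens_eq ra la (fun _ => True) (fun _ => True) Z u v.
Proof. elim=> {u v}; try by econstructor; eauto. Qed.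


Section Final.
Variables (k : fieldType) (A H : algType k) (s t : A -> H)
  (Delta : H -> seq (H * H)) (eps : H -> A).
Hypothesis hbi : left_bialgebroid s t Delta eps.
Hypothesis hflat : sH_flat s.
Variable I : H -> Prop.
Hypothesis hI : left_ideal_coideal s t Delta eps I.
Local Notation B := (coinv s t Delta I).
Local Notation HH := (tens_eq (Hr t) (Hl s) (fun _ : H => True) (fun _ : H => True) (@noneH k H)).

Definition hB : subsp B := coinv_subsp hbi I.
Lemma hr x a : B x -> B (Hr t x a).
Proof. by move=> hx; rewrite /Hr; apply: (coinv_mul hbi hI (coinv_t hbi I a) hx). Qed.

Local Notation S := (sbT hB).
Local Notation rS := (sbr hr).
Local Notation TS := (tens_eq rS (Hl s) (fun _ : S => True) (fun _ : H => True) (fun _ => False)).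

Definition vl (u : seq (S * H)) := [seq (sbv p.1, p.2) | p <- u].

Lemma inj1 (u v : seq (S * H)) : HH (vl u) (vl v) -> TS u v.
Proof. exact: (flat_sub hflat (Hr_right_Amod hbi)). Qed.

Lemma vl_B (u v : seq (S * H)) : TS u v -> teqBH s t B (vl u) (vl v).
Proof.
move=> h; rewrite /vl -!(Fm_map (fun p : S * H => (sbv p.1, p.2))).
apply: (flat_resp (Wp := fun p : H * H => B p.1 /\ allH p.2)
                  (E := fun u v => teqBH s t B u v)) h.
- by move=> *; apply: te_refl.
- by move=> *; apply: te_sym.
- by move=> *; apply: te_trans; eauto.
- by move=> *; apply: te_cat.
- by move=> *; apply: te_comm.
- by move=> [m y] _ _ q; rewrite inE => /eqP -> /=; split => //; apply: sbp.
- by move=> m m' y _ _ _ /=; apply: te_addl => //; apply: sbp.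
- by move=> m y y' _ _ _ /=; apply: te_addr => //; apply: sbp.
- by move=> c m y _ _ /=; apply: te_scal => //; apply: sbp.
- by move=> y _ _ /=; apply: te_zero => //; apply: (sbp (0 : S)).
- by move=> a m y _ _ _ _ /=; apply: te_bal => //; [apply: sbp | apply: (sbp (rS m a))].
- by [].
Qed.

Lemma vl_HH (u v : seq (S * H)) : TS u v -> HH (vl u) (vl v).
Proof. by move=> h; apply: tens_eq_weakP; apply: vl_B. Qed.

Definition toS (h : H) : S :=
  match pselect (B h) with left p => @SB k H B h p | right _ => 0 end.
Lemma toS_val h : B h -> sbv (toS h) = h.
Proof. by rewrite /toS; case: pselect. Qed.

Lemma vl_toS (u : seq (H * H)) : (forall p, p \in u -> B p.1) ->
  vl [seq (toS p.1, p.2) | p <- u] = u.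
Proof.
move=> hu; rewrite /vl -map_comp -[RHS]map_id; apply/eq_in_map => -[x y] /hu /= hx.
by rewrite toS_val.
Qed.

Lemma teqBH_of (u v : seq (H * H)) : (forall p, p \in u -> B p.1) ->
  (forall p, p \in v -> B p.1) -> HH u v -> teqBH s t B u v.
Proof.
move=> hu hv h.
rewrite -(vl_toS hu) -(vl_toS hv); apply: vl_B; apply: inj1.
by rewrite !vl_toS.
Qed.


Local Notation TBH := (@tq k A H s S rS (fun _ => False)).
Local Notation THH := (@tq k A H s H (Hr t) (@noneH k H)).
Local Notation clB := (@tcl k A H s S rS (fun _ => False)).
Local Notation clH := (@tcl k A H s H (Hr t) (@noneH k H)).
Local Notation rB := (@tqr k A H s t S rS (fun _ => False)).
Local Notation rH := (@tqr k A H s t H (Hr t) (@noneH k H)).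
Local Notation T3B := (tens3_eq (Hr t) (Hl s) (Hr t) (Hl s) B).

Lemma T3Bt u v w : T3B u v -> T3B v w -> T3B u w.
Proof. exact: t3_trans. Qed.

Definition f3 (X : TBH) : THH := clH (vl (trep X)).

Lemma f3E u : f3 (clB u) = clH (vl u).
Proof. by apply: tcl_eq; apply: vl_HH; apply: trep_cl. Qed.

Lemma f3_lin c (X Y : TBH) : f3 (c *: X + Y) = c *: f3 X + f3 Y.
Proof.
elim/tq_ind: X => u; elim/tq_ind: Y => v.
rewrite clZ clD !f3E clZ clD; congr tcl.
by rewrite /vl /tsc map_cat -!map_comp.
Qed.

Lemma f3_r (X : TBH) a : f3 (rB X a) = rH (f3 X) a.
Proof.
elim/tq_ind: X => u.
rewrite (tqrE hbi) !f3E (tqrE hbi); congr tcl.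
by rewrite /vl /mapr -!map_comp.
Qed.

Lemma f3_inj : injective f3.
Proof.
elim/tq_ind => u; elim/tq_ind => v; rewrite !f3E => /tcl_inj h.
by apply: tcl_eq; apply: inj1.
Qed.

Lemma ext_S z w w' : TS w w' ->
  T3B [seq (sbv q.1, q.2, z) | q <- w] [seq (sbv q.1, q.2, z) | q <- w'].
Proof.
move=> h; rewrite -!(Fm_map (fun q : S * H => (sbv q.1, q.2, z))).
apply: (T3_flat (P := fun _ => True) (Q := fun _ => True) (Z := fun _ => False)) h.
- by move=> [m y] _ _ q; rewrite inE => /eqP -> /=; apply: sbp.
- by move=> m m' y _ _ _ /=; apply: t3_add1; apply: sbp.
- by move=> m y y' _ _ _ /=; apply: t3_add2; apply: sbp.
- by move=> c m y _ _ /=; apply: t3_scal12; apply: sbp.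
- by move=> y _ _ /=; apply: t3_zero; apply: (sbp (0 : S)).
- by move=> a m y _ _ _ _ /=; apply: t3_bal12; [apply: sbp | apply: (sbp (rS m a))].
- by [].
Qed.

Definition lift3 (p : TBH * H) := [seq (sbv q.1, q.2, p.2) | q <- trep p.1].

Lemma lift3_resp u v :
  tens_eq rB (Hl s) (fun _ => True) (@allH k H) (fun _ => False) u v ->
  T3B (Fm lift3 u) (Fm lift3 v).
Proof.
apply: T3_flat.
- move=> [X y] _ _; rewrite /lift3 /=; elim: (trep X) => //= r w IH q.
  by rewrite inE => /orP [/eqP -> | /IH //]; apply: sbp.
- move=> X X' y _ _ _; rewrite /lift3 /= -map_cat.
  have -> : X + X' = clB (trep X ++ trep X') by rewrite -clD !trepK.
  by apply: ext_S; apply: trep_cl.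
- move=> X y y' _ _ _; rewrite /lift3 /=.
  apply: (@T3_pw2 _ _ _ _ _ (Hr t) (Hl s) (Hr t) (Hl s) B _
    (fun q : S * H => (sbv q.1, q.2, y + y')) (fun q => (sbv q.1, q.2, y))
    (fun q => (sbv q.1, q.2, y'))) => [q|q]; first by split; apply: sbp.
  by apply: t3_add3; apply: sbp.
- move=> c X y _ _; rewrite /lift3 /=.
  have -> : c *: X = clB (tsc c (trep X)) by rewrite -clZ trepK.
  apply: (T3Bt (ext_S y (trep_cl s rS (fun _ => False) (tsc c (trep X))))).
  rewrite /tsc -map_comp.
  apply: (@T3_pw _ _ _ _ _ (Hr t) (Hl s) (Hr t) (Hl s) B _
    (fun q : S * H => (sbv (c *: q.1), q.2, y)) (fun q => (sbv q.1, q.2, c *: y))) => q /=.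
  apply: (T3Bt (v := [:: (sbv q.1, c *: q.2, y)])); first by apply: t3_scal12; apply: sbp.
  by apply: t3_scal23; apply: sbp.
- move=> y _ _; rewrite /lift3 /=.
  by apply: (ext_S y (trep_cl s rS (fun _ => False) [::])).
- move=> a X y _ _ _ _; rewrite /lift3 /=.
  apply: (T3Bt (ext_S y (trep_cl s rS (fun _ => False) (mapr t a (trep X))))).
  rewrite /mapr -map_comp.
  apply: (@T3_pw _ _ _ _ _ (Hr t) (Hl s) (Hr t) (Hl s) B _
    (fun q : S * H => (sbv q.1, t a * q.2, y)) (fun q => (sbv q.1, q.2, Hl s a y))) => q /=.
  by apply: (@t3_bal23 _ _ _ _ _ (Hr t) (Hl s) (Hr t) (Hl s) B); apply: sbp.
- by [].
Qed.

Lemma inj3 (L R : seq (H * H * H)) : wf3 B L -> wf3 B R ->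
  teqB3 s t (@allH k H) L R -> teqB3 s t B L R.
Proof.
move=> hL hR h.
pose g (x : H * H * H) := (clB [:: (toS x.1.1, x.1.2)], x.2).
have e w : wf3 B w -> [seq (f3 p.1, p.2) | p <- map g w] = Fm (Psi s t (@noneH k H)) w.
  move=> hw; rewrite /Psi Fm_map -map_comp; apply/eq_in_map => x /hw hx /=.
  by rewrite f3E /vl /= toS_val.
have h1 := Psi_resp hbi (@noneH k H) h.
rewrite -(e _ hL) -(e _ hR) in h1.
have h2 := hflat (tq_right_Amod hbi rS (fun _ => False)) (tq_right_Amod hbi (Hr t) (@noneH k H))
   f3_lin f3_r f3_inj h1.
have h3 := lift3_resp h2.
have e2 w : wf3 B w -> T3B (Fm lift3 (map g w)) w.
  move=> hw; rewrite Fm_mapc.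
  apply: (T3Bt (v := Fm (fun x : H * H * H => [:: (sbv (toS x.1.1), x.1.2, x.2)]) w)).
    apply: T3_Fm_pw => x; rewrite /= /lift3 /=.
    by apply: (ext_S x.2 (trep_cl s rS (fun _ => False) [:: (toS x.1.1, x.1.2)])).
  rewrite Fm_map.
  have -> : map (fun x : H * H * H => (sbv (toS x.1.1), x.1.2, x.2)) w = w.
    by rewrite -[RHS]map_id; apply/eq_in_map => -[[x y] z] /hw /= hx; rewrite toS_val.
  by apply: t3_refl.
apply: t3_trans (t3_sym (e2 _ hL)) _.
by apply: t3_trans h3 (e2 _ hR).
Qed.

End Final.


Section Final2.
Variables (k : fieldType) (A H : algType k) (s t : A -> H)
  (Delta : H -> seq (H * H)) (eps : H -> A).
Hypothesis hbi : left_bialgebroid s t Delta eps.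
Local Notation HH := (tens_eq (Hr t) (Hl s) (fun _ : H => True) (fun _ : H => True) (@noneH k H)).
Local Notation T3A := (tens3_eq (Hr t) (Hl s) (Hr t) (Hl s) (@allH k H)).

Lemma T3At u v w : T3A u v -> T3A v w -> T3A u w.
Proof. exact: t3_trans. Qed.

Lemma T3A_Fm_pw_in (X : eqType) (f g : X -> seq (H * H * H)) w :
  (forall p, p \in w -> T3A (f p) (g p)) -> T3A (Fm f w) (Fm g w).
Proof.
elim: w => [|p w IH] h; first by apply: t3_refl.
rewrite /Fm /=; apply: t3_cat; first by apply: h; rewrite mem_head.
by apply: IH => q qw; apply: h; rewrite inE qw orbT.
Qed.

Lemma cf_resp u v : HH u v ->
  \sum_(p <- u) t (eps p.2) * p.1 = \sum_(p <- v) t (eps p.2) * p.1.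
Proof.
elim=> {u v}.
- by [].
- by move=> *; apply: esym.
- by move=> s1 s2 s3 _ -> _ ->.
- by move=> s1 s2 s3 s4 _ e1 _ e2; rewrite !big_cat e1 e2.
- by move=> s1 s2 _ _; rewrite !big_cat; apply: addrC.
- by move=> x x' y _ _ _; rewrite !big_cons !big_nil /= !addr0 mulrDr.
- by move=> x y y' _ _ _; rewrite !big_cons !big_nil /= !addr0 (epsD hbi) (tD hbi) mulrDl.
- move=> c x y _ _; rewrite !big_cons !big_nil /= !addr0 (epsZ hbi) (tZ hbi).
  by rewrite -scalerAl scalerAr.
- by move=> y _ _; rewrite big_cons big_nil /= mulr0 addr0.
- move=> a x y _ _ _ _; rewrite !big_cons !big_nil /= !addr0 /Hr /Hl.
  by rewrite (eps_s hbi) (tM hbi) mulrA.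
- by [].
Qed.

Lemma ext3 z u v : HH u v ->
  T3A [seq (q.1, q.2, z) | q <- u] [seq (q.1, q.2, z) | q <- v].
Proof.
move=> h; rewrite -!(Fm_map (fun q : H * H => (q.1, q.2, z))).
apply: (T3_flat (P := fun _ => True) (Q := fun _ => True) (Z := @noneH k H)) h.
- by move=> *; rewrite /wf3 => *.
- by move=> *; apply: t3_add1.
- by move=> *; apply: t3_add2.
- by move=> *; apply: t3_scal12.
- by move=> *; apply: t3_zero.
- by move=> *; apply: t3_bal12.
- by [].
Qed.

Lemma T3A_zero2 x z : T3A [:: (x, 0, z)] [::].
Proof.
apply: (T3At (v := [:: (0 *: x, 0, z)])).
  by rewrite -{1}(scale0r (0 : H)); apply: t3_sym; apply: t3_scal12.
by rewrite scale0r; apply: t3_zero.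
Qed.

Lemma ext3' x u v : HH u v ->
  T3A [seq (x, q.1, q.2) | q <- u] [seq (x, q.1, q.2) | q <- v].
Proof.
move=> h; rewrite -!(Fm_map (fun q : H * H => (x, q.1, q.2))).
apply: (T3_flat (P := fun _ => True) (Q := fun _ => True) (Z := @noneH k H)) h.
- by move=> *; rewrite /wf3 => *.
- by move=> *; apply: t3_add2.
- by move=> *; apply: t3_add3.
- by move=> *; apply: t3_scal23.
- by move=> *; apply: T3A_zero2.
- by move=> *; apply: t3_bal23.
- by [].
Qed.

Lemma Delta_tl a x : HH (Delta (t a * x)) (mapr t a (Delta x)).
Proof.
have h := Delta_bil hbi 1 a x.
have e : s 1 * t a * x = t a * x by rewrite (s1 hbi) mul1r.
rewrite e in h; apply: TE_trans h _; apply: TE_eq.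
by apply: eq_map => p; rewrite (s1 hbi) mul1r.
Qed.

Definition F1 (p : H * H) := [seq (q.1, q.2, p.2) | q <- Delta p.1].
Definition F2 (p : H * H) := [seq (p.1, q.1, q.2) | q <- Delta p.2].

Lemma D1 u v : HH u v -> T3A (Fm F1 u) (Fm F1 v).
Proof.
apply: (T3_flat (P := fun _ => True) (Q := fun _ => True) (Z := @noneH k H)).
- by move=> *; rewrite /wf3 => *.
- by move=> x x' y _ _ _; rewrite /F1 /= -map_cat; apply: ext3; apply: (Delta_add hbi).
- move=> x y y' _ _ _; rewrite /F1 /=.
  by apply: (@T3_pw2 _ _ _ _ _ (Hr t) (Hl s) (Hr t) (Hl s) (@allH k H) _
    (fun q : H * H => (q.1, q.2, y + y')) (fun q => (q.1, q.2, y))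
    (fun q => (q.1, q.2, y'))) => q //; apply: t3_add3.
- move=> c x y _ _; rewrite /F1 /=.
  apply: (T3At (ext3 y (Delta_scale hbi c x))).
  rewrite /tscale -map_comp.
  apply: (@T3_pw _ _ _ _ _ (Hr t) (Hl s) (Hr t) (Hl s) (@allH k H) _
    (fun q : H * H => (c *: q.1, q.2, y)) (fun q => (q.1, q.2, c *: y))) => q /=.
  apply: (T3At (v := [:: (q.1, c *: q.2, y)])); first by apply: t3_scal12.
  by apply: t3_scal23.
- move=> y _ _; rewrite /F1 /=.
  by have := ext3 y (Delta0 hbi).
- move=> a x y _ _ _ _; rewrite /F1 /= /Hr.
  apply: (T3At (ext3 y (Delta_tl a x))).
  rewrite /mapr -map_comp.
  apply: (@T3_pw _ _ _ _ _ (Hr t) (Hl s) (Hr t) (Hl s) (@allH k H) _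
    (fun q : H * H => (q.1, t a * q.2, y)) (fun q => (q.1, q.2, Hl s a y))) => q /=.
  by apply: (@t3_bal23 _ _ _ _ _ (Hr t) (Hl s) (Hr t) (Hl s) (@allH k H)).
- by [].
Qed.

Lemma D2 u v : HH u v -> T3A (Fm F2 u) (Fm F2 v).
Proof.
apply: (T3_flat (P := fun _ => True) (Q := fun _ => True) (Z := @noneH k H)).
- by move=> *; rewrite /wf3 => *.
- move=> x x' y _ _ _; rewrite /F2 /=.
  by apply: (@T3_pw2 _ _ _ _ _ (Hr t) (Hl s) (Hr t) (Hl s) (@allH k H) _
    (fun q : H * H => (x + x', q.1, q.2)) (fun q => (x, q.1, q.2))
    (fun q => (x', q.1, q.2))) => q //; apply: t3_add1.
- by move=> x y y' _ _ _; rewrite /F2 /= -map_cat; apply: ext3'; apply: (Delta_add hbi).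
- move=> c x y _ _; rewrite /F2 /=.
  apply: t3_sym; apply: (T3At (ext3' x (Delta_scale hbi c y))).
  rewrite /tscale -map_comp.
  apply: (@T3_pw _ _ _ _ _ (Hr t) (Hl s) (Hr t) (Hl s) (@allH k H) _
    (fun q : H * H => (x, c *: q.1, q.2)) (fun q => (c *: x, q.1, q.2))) => q /=.
  by apply: t3_sym; apply: t3_scal12.
- move=> y _ _; rewrite /F2 /=.
  by apply: (@T3_pw_nil _ _ _ _ _ (Hr t) (Hl s) (Hr t) (Hl s) (@allH k H) _
    (fun q : H * H => (0, q.1, q.2))) => q; apply: t3_zero.
- move=> a x y _ _ _ _; rewrite /F2 /= /Hl.
  apply: t3_sym; apply: (T3At (ext3' x (Delta_sl hbi a y))).
  rewrite -map_comp.
  apply: (@T3_pw _ _ _ _ _ (Hr t) (Hl s) (Hr t) (Hl s) (@allH k H) _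
    (fun q : H * H => (x, s a * q.1, q.2)) (fun q => (Hr t x a, q.1, q.2))) => q /=.
  by apply: t3_sym; apply: t3_bal12.
- by [].
Qed.

End Final2.


Section Final3.
Variables (k : fieldType) (A H : algType k) (s t : A -> H)
  (Delta : H -> seq (H * H)) (eps : H -> A).
Hypothesis hbi : left_bialgebroid s t Delta eps.
Hypothesis hflat : sH_flat s.
Variable I : H -> Prop.
Hypothesis hI : left_ideal_coideal s t Delta eps I.
Local Notation B := (coinv s t Delta I).
Local Notation HH := (tens_eq (Hr t) (Hl s) (fun _ : H => True) (fun _ : H => True) (@noneH k H)).
Local Notation T3A := (tens3_eq (Hr t) (Hl s) (Hr t) (Hl s) (@allH k H)).

Definition delta (b : H) : seq (H * H) :=
  match pselect (exists z, (forall p, p \in z -> B p.1) /\ teqHH s t (Delta b) z) with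
  | left e => proj1_sig (cid e)
  | right _ => [::]
  end.

Lemma delta_spec b : B b ->
  (forall p, p \in delta b -> B p.1) /\ HH (Delta b) (delta b).
Proof.
move=> hb; rewrite /delta; case: pselect => [e|ne].
  by case: (cid e).
by exfalso; apply: ne; apply: (Delta_in_B hbi hflat hb).
Qed.

Lemma Bt a b : B b -> B (t a * b).
Proof. by move=> hb; apply: (coinv_mul hbi hI (coinv_t hbi I a) hb). Qed.

Lemma main_comod : right_comodule_subring s t Delta eps B delta.
Proof.
have hBs := coinv_subsp hbi I.
split.
- split.
  + exact: (coinv0 hbi I).
  + exact: (coinv1 hbi I).
  + by move=> c x y; apply: (coinv_lin hbi).
  + by move=> x y; apply: (coinv_mul hbi hI).
  + exact: (coinv_t hbi I).
- by move=> b hb; case: (delta_spec hb).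
- move=> c x y hx hy.
  have hxy : B (c *: x + y) by apply: (coinv_lin hbi).
  have [d1 e1] := delta_spec hxy.
  have [d2 e2] := delta_spec hx.
  have [d3 e3] := delta_spec hy.
  apply: (teqBH_of hbi hflat hI) => //.
    move=> p; rewrite mem_cat => /orP [/mapP [q /d2 hq ->] /= | /d3 //].
    by apply: B_scale.
  apply: TE_trans (TE_sym e1) _.
  apply: TE_trans (Delta_lin hbi c x y) _.
  apply: TE_cat => //.
  by apply: TE_tsc => //; exact: Hl_scal.
- move=> a b hb.
  have [d1 e1] := delta_spec (Bt a hb).
  have [d2 e2] := delta_spec hb.
  apply: (teqBH_of hbi hflat hI) => //.
    by move=> p /mapP [q /d2 hq ->].
  apply: TE_trans (TE_sym e1) _.
  apply: TE_trans (Delta_tl hbi a b) _.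
  exact: (QE_mapr hbi a e2).
split.
- move=> b hb.
  have [d1 e1] := delta_spec hb.
  apply: (inj3 hbi hflat hI).
  + move=> p /flatten_mapP [q /d1 hq /mapP [r hr ->]] /=.
    by case: (delta_spec hq) => d _; apply: d.
  + by move=> p /flatten_mapP [q /d1 hq /mapP [r hr ->]].
  apply: (T3At (v := Fm (F1 Delta) (delta b))).
    apply: T3A_Fm_pw_in => p /d1 hp.
    by case: (delta_spec hp) => _ e; apply: ext3; apply: TE_sym.
  apply: (T3At (D1 hbi (TE_sym e1))).
  apply: (T3At (coassoc hbi b)).
  exact: (D2 hbi e1).
- move=> b hb.
  have [_ e1] := delta_spec hb.
  by rewrite -(cf_resp hbi e1) (counit_r hbi).
- by move=> b hb; have [_ e1] := delta_spec hb; apply: TE_sym.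
Qed.
End Final3.

Theorem proposition2p4 (k : fieldType) (A H : algType k) (s t : A -> H)
    (Delta : H -> seq (H * H)) (eps : H -> A) :
  left_bialgebroid s t Delta eps ->
  sH_flat s ->
  (forall I : H -> Prop, left_ideal_coideal s t Delta eps I ->
     exists delta : H -> seq (H * H),
       right_comodule_subring s t Delta eps (coinv s t Delta I) delta) /\
  (forall I J : H -> Prop,
     left_ideal_coideal s t Delta eps I -> left_ideal_coideal s t Delta eps J ->
     (forall x, I x -> J x) -> forall x, coinv s t Delta I x -> coinv s t Delta J x).
Proof.
move=> hbi hflat; split.
  by move=> I hI; exists (delta s t Delta I); apply: main_comod.
by move=> I J _ _ hIJ; apply: coinv_mono.
Qed.
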